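(* Assume Conditions A, B, C with $k=k_1+1>1$ and suppose $N:=\inf_{\lambda\in\mathbb{R}}\min_{|e|=1}H(e,\lambda e\otimes e-I)$ satisfies $-\infty<N<0$. Let $\mu>0$, $R>0$, fix $z\in\mathbb{R}^n$, $r=|x-z|$, $c_k=\left(\frac{k+1}{k-1}\right)^k$, and $E=\frac{R^{k+1}}{c_k\mu^{k-1}(k-1)|N|}$. Then the function $$w(x,t)=\frac{\mu\left[1-(r/R)^{(k+1)/k}\right]^{k/(k-1)}}{(1+t/E)^{1/(k-1)}}$$ is nonnegative, vanishes on $|x-z|=R$, satisfies $w(z,t)=\mu(1+t/E)^{-1/(k-1)}$, and is a viscosity sub-solution of $H(Dw,D^2w)-w_t\ge0$ in $B_R(z)\times(0,T)$ for every $T>0$.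
   Context: $S^{n\times n}$ denotes the real symmetric matrices with the usual order, $I$ the identity, $O$ the zero matrix, $(e\otimes e)_{ij}=e_ie_j$. $H:\mathbb{R}^n\times S^{n\times n}\to\mathbb{R}$ is continuous and satisfies: Condition A: $H(q,X)\le H(q,Y)$ when $X\le Y$ and $H(q,O)=0$. Condition B: there is $k_1\ge0$ with $H(\theta q,X)=|\theta|^{k_1}H(q,X)$ for all $\theta\in\mathbb{R}$ and $H(q,\theta X)=\theta H(q,X)$ for $\theta>0$. Condition C: $\max_{|e|=1}H(e,-I)<0<\min_{|e|=1}H(e,I)$ and $\sup_{\lambda\in\mathbb{R}}\max_{|e|=1}H(e,\lambda e\otimes e+I)<\infty$. $B_R(z)$ is the open ball of radius $R$ about $z$. *)

(* Defs.v *)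
From mathcomp Require Import all_boot.
From Stdlib Require Import Reals.
Set Implicit Arguments.
Unset Strict Implicit.
Open Scope R_scope.

Definition Vec (n : nat) := 'I_n -> R.
Definition Mat (n : nat) := 'I_n -> 'I_n -> R.

Definition sumI (n : nat) (f : 'I_n -> R) : R :=
  foldr (fun i acc => f i + acc) 0 (enum 'I_n).

Definition dot n (x y : Vec n) : R := sumI (fun i => x i * y i).
Definition vnorm n (x : Vec n) : R := sqrt (dot x x).
Definition vdist n (x y : Vec n) : R := vnorm (fun i => x i - y i).
Definition mdist n (X Y : Mat n) : R :=
  sqrt (sumI (fun i => sumI (fun j => (X i j - Y i j) * (X i j - Y i j)))).

Definition vscale n (a : R) (x : Vec n) : Vec n := fun i => a * x i.
Definition mscale n (a : R) (X : Mat n) : Mat n := fun i j => a * X i j.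
Definition madd n (X Y : Mat n) : Mat n := fun i j => X i j + Y i j.

Definition ecoord n (i : 'I_n) : Vec n := fun j => if j == i then 1 else 0.
Definition vshift n (x : Vec n) (i : 'I_n) (s : R) : Vec n :=
  fun j => x j + s * ecoord i j.

Definition Imat n : Mat n := fun i j => if i == j then 1 else 0.
Definition Omat n : Mat n := fun _ _ => 0.
Definition tens n (e : Vec n) : Mat n := fun i j => e i * e j.

Definition symmetric n (X : Mat n) : Prop := forall i j, X i j = X j i.
Definition quad n (X : Mat n) (v : Vec n) : R :=
  sumI (fun i => sumI (fun j => v i * X i j * v j)).
Definition mle n (X Y : Mat n) : Prop :=
  forall v : Vec n, 0 <= quad (fun i j => Y i j - X i j) v.

(* real power a^b; for a <= 0 : 0^b = 0 for b <> 0 and a^0 = 1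
   (only a >= 0 is ever used) *)
Definition rpow (a b : R) : R :=
  match Rlt_dec 0 a with
  | left _ => Rpower a b
  | right _ => match Req_EM_T b 0 with left _ => 1 | right _ => 0 end
  end.

Definition H_continuous n (H : Vec n -> Mat n -> R) : Prop :=
  forall q X, symmetric X -> forall eps, 0 < eps -> exists delta, 0 < delta /\
    forall q' X', symmetric X' -> vdist q' q < delta -> mdist X' X < delta ->
      Rabs (H q' X' - H q X) < eps.

Definition conditionA n (H : Vec n -> Mat n -> R) : Prop :=
  (forall q X Y, symmetric X -> symmetric Y -> mle X Y -> H q X <= H q Y) /\
  (forall q, H q (@Omat n) = 0).

Definition conditionB n (H : Vec n -> Mat n -> R) (k1 : R) : Prop :=
  0 <= k1 /\
  (forall theta q X, symmetric X -> H (vscale theta q) X = rpow (Rabs theta) k1 * H q X) /\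
  (forall theta q X, symmetric X -> 0 < theta -> H q (mscale theta X) = theta * H q X).

Definition conditionC n (H : Vec n -> Mat n -> R) : Prop :=
  (exists m, m < 0 /\ forall e : Vec n, vnorm e = 1 -> H e (mscale (-1) (@Imat n)) <= m) /\
  (exists m, 0 < m /\ forall e : Vec n, vnorm e = 1 -> m <= H e (@Imat n)) /\
  (exists M, forall (lam : R) (e : Vec n), vnorm e = 1 ->
       H e (madd (mscale lam (tens e)) (@Imat n)) <= M).

Definition is_N n (H : Vec n -> Mat n -> R) (N : R) : Prop :=
  (forall (lam : R) (e : Vec n), vnorm e = 1 ->
      N <= H e (madd (mscale lam (tens e)) (mscale (-1) (@Imat n)))) /\
  (forall eps, 0 < eps -> exists (lam : R) (e : Vec n), vnorm e = 1 /\
      H e (madd (mscale lam (tens e)) (mscale (-1) (@Imat n))) < N + eps).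

Definition cont_on n (f : Vec n -> R -> R) (Dom : Vec n -> R -> Prop) : Prop :=
  forall x t, Dom x t -> forall eps, 0 < eps -> exists delta, 0 < delta /\
    forall y s, Dom y s -> vdist y x < delta -> Rabs (s - t) < delta ->
      Rabs (f y s - f x t) < eps.

Definition usc_on n (f : Vec n -> R -> R) (Dom : Vec n -> R -> Prop) : Prop :=
  forall x t, Dom x t -> forall eps, 0 < eps -> exists delta, 0 < delta /\
    forall y s, Dom y s -> vdist y x < delta -> Rabs (s - t) < delta ->
      f y s < f x t + eps.

Definition C21_on n (phi : Vec n -> R -> R) (Dphi : Vec n -> R -> Vec n)
    (D2phi : Vec n -> R -> Mat n) (phit : Vec n -> R -> R)
    (Dom : Vec n -> R -> Prop) : Prop :=
  (forall x t, Dom x t -> forall i,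
      derivable_pt_lim (fun s => phi (vshift x i s) t) 0 (Dphi x t i)) /\
  (forall x t, Dom x t -> forall i j,
      derivable_pt_lim (fun s => Dphi (vshift x j s) t i) 0 (D2phi x t i j)) /\
  (forall x t, Dom x t -> derivable_pt_lim (fun s => phi x s) t (phit x t)) /\
  cont_on phi Dom /\
  (forall i, cont_on (fun x t => Dphi x t i) Dom) /\
  (forall i j, cont_on (fun x t => D2phi x t i j) Dom) /\
  cont_on phit Dom.

Definition local_max_on n (f : Vec n -> R -> R) (Dom : Vec n -> R -> Prop)
    (x0 : Vec n) (t0 : R) : Prop :=
  exists delta, 0 < delta /\
    forall x t, Dom x t -> vdist x x0 < delta -> Rabs (t - t0) < delta ->
      f x t <= f x0 t0.

Definition visc_subsolution n (H : Vec n -> Mat n -> R) (u : Vec n -> R -> R)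
    (Dom : Vec n -> R -> Prop) : Prop :=
  usc_on u Dom /\
  forall phi Dphi D2phi phit, C21_on phi Dphi D2phi phit Dom ->
    forall x0 t0, Dom x0 t0 ->
      local_max_on (fun x t => u x t - phi x t) Dom x0 t0 ->
      H (Dphi x0 t0) (D2phi x0 t0) - phit x0 t0 >= 0.

Definition c_k (k : R) : R := rpow ((k + 1) / (k - 1)) k.

Definition E_const (k mu Rad N : R) : R :=
  rpow Rad (k + 1) / (c_k k * rpow mu (k - 1) * (k - 1) * Rabs N).

Definition wfun n (k mu Rad N : R) (z : Vec n) (x : Vec n) (t : R) : R :=
  mu * rpow (1 - rpow (vdist x z / Rad) ((k + 1) / k)) (k / (k - 1))
     / rpow (1 + t / E_const k mu Rad N) (1 / (k - 1)).

(* Main.v *)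
Require Import Defs.
From mathcomp Require Import all_boot.
From Stdlib Require Import Reals.
Open Scope R_scope.
From Coquelicot Require Import Coquelicot.
From Stdlib Require Import Lra Psatz FunctionalExtensionality.
Open Scope R_scope.

Section Sums.
Variable n : nat.
Definition sumL (l : seq 'I_n) (f : 'I_n -> R) : R :=
  foldr (fun i acc => f i + acc) 0 l.

Lemma sumI_L (f : 'I_n -> R) : sumI f = sumL (enum 'I_n) f.
Proof. reflexivity. Qed.

Lemma sumL_ext l f g : (forall i, f i = g i) -> sumL l f = sumL l g.
Proof. intros Hf; induction l as [|a l IH]; simpl; auto. rewrite Hf IH; auto. Qed.

Lemma sumL_plus l f g : sumL l (fun i => f i + g i) = sumL l f + sumL l g.
Proof. induction l as [|a l IH]; simpl. lra. rewrite IH; lra. Qed.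

Lemma sumL_scal l c f : sumL l (fun i => c * f i) = c * sumL l f.
Proof. induction l as [|a l IH]; simpl. lra. rewrite IH; lra. Qed.

Lemma sumL_opp l f : sumL l (fun i => - f i) = - sumL l f.
Proof. induction l as [|a l IH]; simpl. lra. rewrite IH; lra. Qed.

Lemma sumL_minus l f g : sumL l (fun i => f i - g i) = sumL l f - sumL l g.
Proof. induction l as [|a l IH]; simpl. lra. rewrite IH; lra. Qed.

Lemma sumL_zero l : sumL l (fun _ => 0) = 0.
Proof. induction l as [|a l IH]; simpl. lra. rewrite IH; lra. Qed.

Lemma sumL_le l f g : (forall i, f i <= g i) -> sumL l f <= sumL l g.
Proof. intros Hf; induction l as [|a l IH]; simpl. lra. specialize (Hf a); lra. Qed.

Lemma sumL_ge0 l f : (forall i, 0 <= f i) -> 0 <= sumL l f.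
Proof. intros Hf. rewrite <- (sumL_zero l). apply sumL_le; auto. Qed.

Lemma sumL_single_le l f i : (forall j, 0 <= f j) -> i \in l -> f i <= sumL l f.
Proof.
  intros Hf; induction l as [|a l IH]; simpl. rewrite in_nil; discriminate.
  rewrite in_cons; move/orP=> [/eqP ->|Hi].
  - have := sumL_ge0 l f Hf. lra.
  - have := IH Hi. have := Hf a. lra.
Qed.

Lemma sumL_delta l i (f : 'I_n -> R) : uniq l ->
  sumL l (fun j => if j == i then f j else 0) = if i \in l then f i else 0.
Proof.
  induction l as [|a l IH]; simpl; auto.
  move/andP=> [Ha Hu]. rewrite IH // in_cons.
  case: (eqVneq a i) Ha => [->|Hne] Ha /=.
  - rewrite (negbTE Ha). lra.
  - lra.
Qed.

Lemma sumI_delta i (f : 'I_n -> R) :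
  sumI (fun j => if j == i then f j else 0) = f i.
Proof. rewrite sumI_L sumL_delta ?enum_uniq // mem_enum //. Qed.

Lemma sumL_abs l f : Rabs (sumL l f) <= sumL l (fun i => Rabs (f i)).
Proof. induction l as [|a l IH]; simpl. rewrite Rabs_R0; lra.
  eapply Rle_trans. apply Rabs_triang. lra. Qed.

Lemma sumL_derive l (F : 'I_n -> R -> R) (F' : 'I_n -> R) x :
  (forall i, derivable_pt_lim (F i) x (F' i)) ->
  derivable_pt_lim (fun s => sumL l (fun i => F i s)) x (sumL l F').
Proof.
  intros HF; induction l as [|a l IH]; simpl.
  - apply derivable_pt_lim_const.
  - apply (derivable_pt_lim_plus (F a) (fun s => sumL l (fun i => F i s))); auto.
Qed.
End Sums.


Section Vecs.
Variable n : nat.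
Implicit Types x y v w a e : Vec n.

Lemma dot_ge0 x : 0 <= dot x x.
Proof. unfold dot. rewrite sumI_L. apply sumL_ge0. intros; nra. Qed.

Lemma vnorm_ge0 x : 0 <= vnorm x.
Proof. apply sqrt_pos. Qed.

Lemma vnorm_sq x : vnorm x * vnorm x = dot x x.
Proof. apply sqrt_sqrt, dot_ge0. Qed.

Lemma coord_le_vnorm x i : Rabs (x i) <= vnorm x.
Proof.
  unfold vnorm. rewrite <- sqrt_Rsqr_abs. apply sqrt_le_1_alt.
  unfold dot, Rsqr. rewrite sumI_L. apply (sumL_single_le _ _ (fun i => x i * x i)).
  intros; nra. apply mem_enum.
Qed.

Lemma vnorm_mono w a : (forall j, Rabs (w j) <= Rabs (a j)) -> vnorm w <= vnorm a.
Proof.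
  intros Hj. apply sqrt_le_1_alt. unfold dot. rewrite !sumI_L. apply sumL_le.
  intros i. specialize (Hj i).
  have E1 : w i * w i = Rabs (w i) * Rabs (w i) by rewrite -Rabs_mult Rabs_pos_eq; nra.
  have E2 : a i * a i = Rabs (a i) * Rabs (a i) by rewrite -Rabs_mult Rabs_pos_eq; nra.
  rewrite E1 E2. have := Rabs_pos (w i). nra.
Qed.

Lemma dot_scal_l c x y : dot (fun i => c * x i) y = c * dot x y.
Proof. unfold dot. rewrite !sumI_L -sumL_scal. apply sumL_ext. intros; ring. Qed.

Lemma dot_sym x y : dot x y = dot y x.
Proof. unfold dot. rewrite !sumI_L. apply sumL_ext. intros; ring. Qed.

Lemma vnorm_scale c v : vnorm (fun i => c * v i) = Rabs c * vnorm v.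
Proof.
  unfold vnorm. replace (dot (fun i => c * v i) (fun i => c * v i)) with ((c*c) * dot v v).
  rewrite sqrt_mult; try nra. 2: apply dot_ge0. f_equal. rewrite <- sqrt_Rsqr_abs. reflexivity.
  unfold dot. rewrite !sumI_L -sumL_scal. apply sumL_ext. intros; ring.
Qed.

Lemma dot_expand a v s :
  dot (fun i => a i + s * v i) (fun i => a i + s * v i)
  = dot a a + 2 * s * dot a v + s * s * dot v v.
Proof.
  unfold dot. rewrite !sumI_L.
  rewrite -(sumL_scal _ _ (2*s)) -(sumL_scal _ _ (s*s)) -!sumL_plus.
  apply sumL_ext. intros; ring.
Qed.

Lemma vdist_self x : vdist x x = 0.
Proof.
  unfold vdist, vnorm, dot. rewrite sumI_L.
  rewrite (sumL_ext _ _ _ (fun _ => 0)). rewrite sumL_zero. apply sqrt_0.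
  intros; ring.
Qed.

Lemma quad_sub (X Y : Mat n) v : quad (fun i j => X i j - Y i j) v = quad X v - quad Y v.
Proof.
  unfold quad. rewrite !sumI_L -sumL_minus. apply sumL_ext. intros i.
  rewrite !sumI_L -sumL_minus. apply sumL_ext. intros; ring.
Qed.

Lemma quad_madd (X Y : Mat n) v : quad (madd X Y) v = quad X v + quad Y v.
Proof.
  unfold quad, madd. rewrite !sumI_L -sumL_plus. apply sumL_ext. intros i.
  rewrite !sumI_L -sumL_plus. apply sumL_ext. intros; ring.
Qed.

Lemma quad_mscale c (X : Mat n) v : quad (mscale c X) v = c * quad X v.
Proof.
  unfold quad, mscale. rewrite !sumI_L -sumL_scal. apply sumL_ext. intros i.
  rewrite !sumI_L -sumL_scal. apply sumL_ext. intros; ring.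
Qed.

Lemma quad_tens e v : quad (tens e) v = dot e v * dot e v.
Proof.
  unfold quad, tens, dot. rewrite !sumI_L.
  rewrite -sumL_scal. apply sumL_ext. intros i.
  rewrite sumI_L Rmult_comm -sumL_scal. apply sumL_ext. intros; ring.
Qed.

Lemma quad_I v : quad (@Imat n) v = dot v v.
Proof.
  unfold quad, Imat, dot. apply sumL_ext. intros i.
  transitivity (v i * 1 * v i). 2: ring.
  rewrite -(sumI_delta _ i (fun j => v i * 1 * v j)). apply sumL_ext. intros j.
  rewrite eq_sym. case: (j == i); ring.
Qed.

Lemma symmetric_tens e : Defs.symmetric (tens e).
Proof. intros i j; unfold tens; ring. Qed.
Lemma symmetric_I : Defs.symmetric (@Imat n).
Proof. intros i j; unfold Imat; rewrite eq_sym; auto. Qed.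
Lemma symmetric_madd X Y : Defs.symmetric X -> Defs.symmetric Y -> Defs.symmetric (@madd n X Y).
Proof. intros HX HY i j; unfold madd; rewrite HX HY; auto. Qed.
Lemma symmetric_mscale c X : Defs.symmetric X -> Defs.symmetric (@mscale n c X).
Proof. intros HX i j; unfold mscale; rewrite HX; auto. Qed.

End Vecs.


Ltac fl := field; repeat split; try (intro; lra).

Lemma deriv_max0 (h : R -> R) x l d : derivable_pt_lim h x l -> 0 < d ->
  (forall s, Rabs (s - x) < d -> h s <= h x) -> l = 0.
Proof.
  intros Hd Hdp Hmax.
  destruct (Rtotal_order l 0) as [Hl|[Hl|Hl]]; auto; exfalso.
  - destruct (Hd (- l / 2)) as [de Hde]; [lra|].
    pose proof (Rmin_pos d de Hdp (cond_pos de)) as Hm.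
    pose proof (Rmin_l d de). pose proof (Rmin_r d de).
    assert (Hu2 : Rabs (- Rmin d de / 2) < de) by (rewrite Rabs_left; lra).
    specialize (Hde (- Rmin d de / 2) ltac:(lra) Hu2).
    assert (Hx : Rabs (x + - Rmin d de / 2 - x) < d) by (rewrite Rabs_left; lra).
    specialize (Hmax _ Hx).
    apply Rabs_def2 in Hde.
    assert (Hq : (h (x + - Rmin d de / 2) - h x) / (- Rmin d de / 2) >= 0).
    { replace ((h (x + - Rmin d de / 2) - h x) / (- Rmin d de / 2))
        with ((h x - h (x + - Rmin d de / 2)) * / (Rmin d de / 2)) by fl.
      apply Rle_ge, Rmult_le_pos; [lra|]. apply Rlt_le, Rinv_0_lt_compat; lra. }
    lra.
  - destruct (Hd (l / 2)) as [de Hde]; [lra|].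
    pose proof (Rmin_pos d de Hdp (cond_pos de)) as Hm.
    pose proof (Rmin_l d de). pose proof (Rmin_r d de).
    assert (Hu2 : Rabs (Rmin d de / 2) < de) by (rewrite Rabs_right; lra).
    specialize (Hde (Rmin d de / 2) ltac:(lra) Hu2).
    assert (Hx : Rabs (x + Rmin d de / 2 - x) < d) by (rewrite Rabs_right; lra).
    specialize (Hmax _ Hx).
    apply Rabs_def2 in Hde.
    assert (Hq : (h (x + Rmin d de / 2) - h x) / (Rmin d de / 2) <= 0).
    { replace ((h (x + Rmin d de / 2) - h x) / (Rmin d de / 2))
        with (- ((h x - h (x + Rmin d de / 2)) * / (Rmin d de / 2))) by fl.
      assert (0 <= (h x - h (x + Rmin d de / 2)) * / (Rmin d de / 2)); [|lra].
      apply Rmult_le_pos; [lra|]. apply Rlt_le, Rinv_0_lt_compat; lra. }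
    lra.
Qed.

Lemma deriv2_max (h h' : R -> R) x l d : 0 < d ->
  (forall s, Rabs (s - x) < d -> derivable_pt_lim h s (h' s)) ->
  derivable_pt_lim h' x l ->
  (forall s, Rabs (s - x) < d -> h s <= h x) -> l <= 0.
Proof.
  intros Hdp Hd1 Hd2 Hmax.
  have H0 : h' x = 0.
  { apply (deriv_max0 h x _ d); auto. apply Hd1. rewrite Rminus_diag Rabs_R0; lra. }
  destruct (Rle_lt_dec l 0) as [|Hl]; auto; exfalso.
  destruct (Hd2 (l / 2)) as [de Hde]; [lra|].
  set m := Rmin d de / 2.
  have Hm := Rmin_pos d de Hdp (cond_pos de).
  have Hm1 := Rmin_l d de. have Hm2 := Rmin_r d de.
  have Hpos : forall c, x < c <= x + m -> 0 < h' c.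
  { intros c Hc. specialize (Hde (c - x) ltac:(unfold m in *; lra)
       ltac:(rewrite Rabs_right; unfold m in *; lra)).
    replace (x + (c - x)) with c in Hde by ring. rewrite H0 in Hde.
    apply Rabs_def2 in Hde.
    have : 0 < (h' c - 0) / (c - x) by lra.
    intros Hq. unfold Rdiv in Hq. 
    have Hi : 0 < / (c - x) by (apply Rinv_0_lt_compat; lra).
    destruct (Rle_lt_dec (h' c) 0) as [Hc'|]; auto.
    have : (h' c - 0) * / (c - x) <= 0 by (apply Rmult_le_0_r; lra).
    lra. }
  destruct (MVT_cor2 h h' x (x + m)) as [c [Hc1 Hc2]]; [unfold m; lra| |].
  { intros c Hc. apply Hd1. rewrite Rabs_right; unfold m in *; lra. }
  have := Hmax (x + m) ltac:(rewrite Rabs_right; unfold m in *; lra).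
  have := Hpos c ltac:(lra).
  replace (x + m - x) with m in Hc1 by ring.
  have : 0 < m by (unfold m; lra). nra.
Qed.


Lemma MVT_any (phi phi' : R -> R) b :
  (forall c, Rabs c <= Rabs b -> derivable_pt_lim phi c (phi' c)) ->
  exists c, Rabs c <= Rabs b /\ phi b - phi 0 = phi' c * b.
Proof.
  intros Hd. destruct (Rtotal_order b 0) as [Hb|[Hb|Hb]].
  - destruct (MVT_cor2 phi phi' b 0 Hb) as [c [Hc1 Hc2]].
    { intros c Hc. apply Hd. rewrite !Rabs_left1; lra. }
    exists c. split. rewrite !Rabs_left1; lra. lra.
  - subst. exists 0. split. lra. ring.
  - destruct (MVT_cor2 phi phi' 0 b Hb) as [c [Hc1 Hc2]].
    { intros c Hc. apply Hd. rewrite !Rabs_pos_eq; lra. }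
    exists c. split. rewrite !Rabs_pos_eq; lra. lra.
Qed.

Section Chain.
Variable n : nat.

Definition vL (L : seq 'I_n) (v : Vec n) : Vec n := fun j => if j \in L then v j else 0.

Lemma vdist_bound (q x v : Vec n) s :
  (forall j, Rabs (q j - x j) <= Rabs s * Rabs (v j)) -> vdist q x <= Rabs s * vnorm v.
Proof.
  intros Hj. unfold vdist. rewrite <- vnorm_scale. apply vnorm_mono.
  intros j. rewrite Rabs_mult. auto.
Qed.

Lemma vshift_vshift (y : Vec n) i c h : vshift (vshift y i c) i h = vshift y i (c + h).
Proof. apply functional_extensionality; intros j; unfold vshift; ring. Qed.

Variables (f : Vec n -> R) (Df : Vec n -> 'I_n -> R) (x : Vec n) (d0 : R).
Hypothesis Hd0 : 0 < d0.
Hypothesis Hder : forall y, vdist y x < d0 -> forall j,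
  derivable_pt_lim (fun s => f (vshift y j s)) 0 (Df y j).
Hypothesis Hcont : forall j eps, 0 < eps -> exists de, 0 < de /\
  forall y, vdist y x < de -> Rabs (Df y j - Df x j) < eps.

Lemma der_line y j c : vdist (vshift y j c) x < d0 ->
  derivable_pt_lim (fun s => f (vshift y j s)) c (Df (vshift y j c) j).
Proof.
  intros Hy. have := Hder (vshift y j c) Hy j.
  intros H0 eps Heps. destruct (H0 eps Heps) as [de Hde]. exists de.
  intros h Hh Hhd. specialize (Hde h Hh Hhd).
  rewrite !vshift_vshift in Hde. rewrite Rplus_0_l Rplus_0_r in Hde. auto.
Qed.

Lemma chain_step (v : Vec n) (L : seq 'I_n) i : i \notin L ->
  derivable_pt_lim
    (fun s => f (vshift (fun j => x j + s * vL L v j) i (s * v i)) - f (fun j => x j + s * vL L v j))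
    0 (v i * Df x i).
Proof.
  intros Hi eps Heps.
  destruct (Hcont i (eps / (Rabs (v i) + 1))) as [de [Hde Hde']].
  { apply Rdiv_lt_0_compat; auto. have := Rabs_pos (v i); lra. }
  set m := Rmin d0 de.
  have Hm : 0 < m by apply Rmin_pos.
  have Hv := vnorm_ge0 _ v.
  have Hpos : 0 < m / (vnorm v + 1) by (apply Rdiv_lt_0_compat; lra).
  exists (mkposreal _ Hpos). simpl. intros s Hs0 Hs.
  set y := (fun j => x j + s * vL L v j).
  have Hsm : Rabs s * vnorm v < m.
  { have Hs' : Rabs s * (vnorm v + 1) < m.
    { apply (Rmult_lt_compat_r (vnorm v + 1)) in Hs; [|lra].
      unfold Rdiv in Hs. rewrite Rmult_assoc Rinv_l in Hs; lra. }
    have := Rabs_pos s. nra. }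
  have Hpt : forall c, Rabs c <= Rabs (s * v i) -> vdist (vshift y i c) x < m.
  { intros c Hc. eapply Rle_lt_trans; [|apply Hsm]. apply vdist_bound.
    intros j. unfold y, vshift, ecoord, vL.
    case: (eqVneq j i) => [->|Hne].
    - rewrite (negbTE Hi). rewrite <- Rabs_mult.
      replace (x i + s * 0 + c * 1 - x i) with c by ring. auto.
    - rewrite <- Rabs_mult. case: (j \in L).
      + replace (x j + s * v j + c * 0 - x j) with (s * v j) by ring. lra.
      + replace (x j + s * 0 + c * 0 - x j) with 0 by ring. rewrite Rabs_R0.
        apply Rabs_pos. }
  destruct (MVT_any (fun c => f (vshift y i c)) (fun c => Df (vshift y i c) i) (s * v i))
    as [c [Hc Heq]].
  { intros c Hc. apply der_line. eapply Rlt_le_trans. apply Hpt; auto. apply Rmin_l. }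
  have Hy0 : vshift y i 0 = y.
  { apply functional_extensionality; intros j; unfold vshift; ring. }
  rewrite Hy0 in Heq.
  replace (0 + s) with s by ring. 
  have E0 : f (vshift (fun j => x j + 0 * vL L v j) i (0 * v i)) - f (fun j => x j + 0 * vL L v j) = 0.
  { replace (0 * v i) with 0 by ring. rewrite (_ : vshift _ i 0 = (fun j => x j + 0 * vL L v j)).
    ring. apply functional_extensionality; intros j; unfold vshift; ring. }
  rewrite E0. fold y. rewrite Rminus_0_r Heq.
  replace (Df (vshift y i c) i * (s * v i) / s - v i * Df x i)
    with (v i * (Df (vshift y i c) i - Df x i)) by (field; auto).
  rewrite Rabs_mult.
  have Hq := Hde' (vshift y i c) (Rlt_le_trans _ _ _ (Hpt c Hc) (Rmin_r _ _)).
  have Hva := Rabs_pos (v i).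
  have : Rabs (v i) * Rabs (Df (vshift y i c) i - Df x i) <= Rabs (v i) * (eps / (Rabs (v i) + 1)).
  { apply Rmult_le_compat_l; lra. }
  have : Rabs (v i) * (eps / (Rabs (v i) + 1)) < eps.
  { apply (Rmult_lt_reg_r (Rabs (v i) + 1)). lra.
    unfold Rdiv. rewrite Rmult_assoc Rmult_assoc Rinv_l; lra. }
  lra.
Qed.

Lemma chain_L (v : Vec n) (L : seq 'I_n) : uniq L ->
  derivable_pt_lim (fun s => f (fun j => x j + s * vL L v j)) 0 (sumL n L (fun j => v j * Df x j)).
Proof.
  induction L as [|i L IH]; simpl.
  - intros _. rewrite (_ : (fun s => f (fun j => x j + s * vL [::] v j)) = fun _ => f x).
    apply derivable_pt_lim_const.
    apply functional_extensionality; intros s. f_equal.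
    apply functional_extensionality; intros j; unfold vL. rewrite in_nil. ring.
  - move/andP=> [Hi Hu].
    rewrite (_ : (fun s => f (fun j => x j + s * vL (i :: L) v j)) =
       fun s => (f (vshift (fun j => x j + s * vL L v j) i (s * v i)) - f (fun j => x j + s * vL L v j))
                + f (fun j => x j + s * vL L v j)).
    apply derivable_pt_lim_plus; auto. apply chain_step; auto.
    apply functional_extensionality; intros s. 
    transitivity (f (vshift (fun j => x j + s * vL L v j) i (s * v i))); [|ring]. f_equal.
    apply functional_extensionality; intros j; unfold vL, vshift, ecoord. rewrite in_cons.
    case: (eqVneq j i) => [->|Hne] /=.
    + rewrite (negbTE Hi). ring.
    + ring.
Qed.

Lemma chain_rule (v : Vec n) :
  derivable_pt_lim (fun s => f (fun j => x j + s * v j)) 0 (sumI (fun j => v j * Df x j)).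
Proof.
  have := chain_L v (enum 'I_n) (enum_uniq _).
  rewrite (_ : vL (enum 'I_n) v = v) //.
  apply functional_extensionality; intros j; unfold vL; rewrite mem_enum; auto.
Qed.
End Chain.


Lemma loc_of (f g : R -> R) x d : 0 < d -> (forall y, Rabs (y - x) < d -> f y = g y) ->
  locally x (fun t => f t = g t).
Proof. intros Hd H. exists (mkposreal d Hd). intros y Hy. apply H. exact Hy. Qed.

Lemma der_shift (g : R -> R) c l : derivable_pt_lim (fun h => g (c + h)) 0 l ->
  derivable_pt_lim g c l.
Proof.
  intros H eps Heps. destruct (H eps Heps) as [de Hde]. exists de. intros h H1 H2.
  specialize (Hde h H1 H2). rewrite Rplus_0_l Rplus_0_r in Hde. auto.
Qed.

Lemma Derive_loc (g h : R -> R) x l d : 0 < d -> (forall y, Rabs (y - x) < d -> g y = h y) ->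
  derivable_pt_lim h x l -> Derive g x = l /\ ex_derive g x.
Proof.
  intros Hd Heq Hl. apply is_derive_Reals in Hl.
  have Hg : is_derive g x l.
  { apply (is_derive_ext_loc h g); auto. apply (loc_of h g x d); auto.
    intros y Hy; symmetry; auto. }
  split. apply is_derive_unique; auto. exists l; auto.
Qed.

Section Schw.
Variable n : nat.
Variables (f : Vec n -> R) (Df : Vec n -> 'I_n -> R) (D2f : Vec n -> 'I_n -> 'I_n -> R)
  (x0 : Vec n) (d0 : R).
Hypothesis Hd0 : 0 < d0.
Hypothesis Hf : forall y, vdist y x0 < d0 -> forall i,
  derivable_pt_lim (fun s => f (vshift y i s)) 0 (Df y i).
Hypothesis HDf : forall y, vdist y x0 < d0 -> forall i j,
  derivable_pt_lim (fun s => Df (vshift y j s) i) 0 (D2f y i j).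
Hypothesis Hc : forall i j eps, 0 < eps -> exists de, 0 < de /\
  forall y, vdist y x0 < de -> Rabs (D2f y i j - D2f x0 i j) < eps.

Variables (i j : 'I_n).
Definition P (u v : R) : Vec n := fun k => x0 k + u * ecoord i k + v * ecoord j k.
Definition ones : Vec n := fun _ => 1.
Definition CC := vnorm ones + 1.

Lemma CC_pos : 0 < CC.
Proof. unfold CC. have := vnorm_ge0 _ ones. lra. Qed.

Lemma Pdist u v : vdist (P u v) x0 <= (Rabs u + Rabs v) * vnorm ones.
Proof.
  have Hp : 0 <= Rabs u + Rabs v by (have := Rabs_pos u; have := Rabs_pos v; lra).
  rewrite -{1}(Rabs_pos_eq (Rabs u + Rabs v) Hp).
  apply vdist_bound. intros k. unfold P, ones, ecoord.
  rewrite Rabs_R1 Rmult_1_r (Rabs_pos_eq _ Hp).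
  case: (k == i); case: (k == j).
  - replace (x0 k + u * 1 + v * 1 - x0 k) with (u + v) by ring. apply Rabs_triang.
  - replace (x0 k + u * 1 + v * 0 - x0 k) with u by ring. have := Rabs_pos v; lra.
  - replace (x0 k + u * 0 + v * 1 - x0 k) with v by ring. have := Rabs_pos u; lra.
  - replace (x0 k + u * 0 + v * 0 - x0 k) with 0 by ring. rewrite Rabs_R0; lra.
Qed.

Definition d1 := d0 / (2 * CC).

Lemma d1_pos : 0 < d1.
Proof. unfold d1. have := CC_pos. intros. apply Rdiv_lt_0_compat; lra. Qed.

Lemma Pin u v : Rabs u < d1 -> Rabs v < d1 -> vdist (P u v) x0 < d0.
Proof.
  intros Hu Hv. eapply Rle_lt_trans. apply Pdist.
  have Hn := vnorm_ge0 _ ones. have HC := CC_pos.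
  have : (Rabs u + Rabs v) * vnorm ones <= (Rabs u + Rabs v) * CC.
  { apply Rmult_le_compat_l. have := Rabs_pos u; have := Rabs_pos v; lra. unfold CC; lra. }
  have : (Rabs u + Rabs v) * CC < 2 * d1 * CC by nra.
  have : 2 * d1 * CC = d0 by (unfold d1; field; lra).
  lra.
Qed.

Definition F (u v : R) := f (P u v).

Lemma vshift_Pj u v h : vshift (P u v) j h = P u (v + h).
Proof. apply functional_extensionality; intros k; unfold vshift, P; ring. Qed.
Lemma vshift_Pi u v h : vshift (P u v) i h = P (u + h) v.
Proof. apply functional_extensionality; intros k; unfold vshift, P; ring. Qed.

Lemma Fv u v : Rabs u < d1 -> Rabs v < d1 ->
  derivable_pt_lim (fun t => F u t) v (Df (P u v) j).
Proof.
  intros Hu Hv. apply der_shift. unfold F.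
  rewrite (_ : (fun h => f (P u (v + h))) = (fun h => f (vshift (P u v) j h))).
  apply Hf, Pin; auto.
  apply functional_extensionality; intros h. rewrite vshift_Pj; auto.
Qed.

Lemma Fu u v : Rabs u < d1 -> Rabs v < d1 ->
  derivable_pt_lim (fun t => F t v) u (Df (P u v) i).
Proof.
  intros Hu Hv. apply der_shift. unfold F.
  rewrite (_ : (fun h => f (P (u + h) v)) = (fun h => f (vshift (P u v) i h))).
  apply Hf, Pin; auto.
  apply functional_extensionality; intros h. rewrite vshift_Pi; auto.
Qed.

Lemma DFv u v : Rabs u < d1 -> Rabs v < d1 ->
  derivable_pt_lim (fun z => Df (P z v) j) u (D2f (P u v) j i).
Proof.
  intros Hu Hv. apply der_shift.
  rewrite (_ : (fun h => Df (P (u + h) v) j) = (fun h => Df (vshift (P u v) i h) j)).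
  apply HDf, Pin; auto.
  apply functional_extensionality; intros h. rewrite vshift_Pi; auto.
Qed.

Lemma DFu u v : Rabs u < d1 -> Rabs v < d1 ->
  derivable_pt_lim (fun z => Df (P u z) i) v (D2f (P u v) i j).
Proof.
  intros Hu Hv. apply der_shift.
  rewrite (_ : (fun h => Df (P u (v + h)) i) = (fun h => Df (vshift (P u v) j h) i)).
  apply HDf, Pin; auto.
  apply functional_extensionality; intros h. rewrite vshift_Pj; auto.
Qed.

Lemma G1_eq u v : Rabs u < d1 / 2 -> Rabs v < d1 / 2 ->
  Derive (fun z => Derive (fun t => F z t) v) u = D2f (P u v) j i /\
  ex_derive (fun z => Derive (fun t => F z t) v) u.
Proof.
  intros Hu Hv. have Hd1 := d1_pos.
  apply (Derive_loc _ (fun z => Df (P z v) j) u _ (d1 / 2)). lra.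
  - intros y Hy. apply (Derive_loc _ (fun t => F y t) v _ d1); auto.
    apply Fv. have := Rabs_triang_inv y u. lra. lra.
  - apply DFv; lra.
Qed.

Lemma G2_eq u v : Rabs u < d1 / 2 -> Rabs v < d1 / 2 ->
  Derive (fun z => Derive (fun t => F t z) u) v = D2f (P u v) i j /\
  ex_derive (fun z => Derive (fun t => F t z) u) v.
Proof.
  intros Hu Hv. have Hd1 := d1_pos.
  apply (Derive_loc _ (fun z => Df (P u z) i) v _ (d1 / 2)). lra.
  - intros y Hy. apply (Derive_loc _ (fun t => F t y) u _ d1); auto.
    apply Fu. lra. have := Rabs_triang_inv y v. lra.
  - apply DFu; lra.
Qed.

Lemma P00 : P 0 0 = x0.
Proof. apply functional_extensionality; intros k; unfold P; ring. Qed.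

Lemma cont2 i' j' (G : R -> R -> R) :
  (forall u v, Rabs u < d1 / 2 -> Rabs v < d1 / 2 -> G u v = D2f (P u v) i' j') ->
  continuity_2d_pt G 0 0.
Proof.
  intros HG eps. have Hd1 := d1_pos.
  destruct (Hc i' j' eps (cond_pos eps)) as [de [Hde Hde']].
  have HC := CC_pos.
  have Hp : 0 < Rmin (d1 / 2) (de / (2 * CC)).
  { apply Rmin_pos. lra. apply Rdiv_lt_0_compat; lra. }
  exists (mkposreal _ Hp). simpl. intros u v Hu Hv.
  rewrite Rminus_0_r in Hu. rewrite Rminus_0_r in Hv.
  have := Rmin_l (d1 / 2) (de / (2 * CC)). have := Rmin_r (d1 / 2) (de / (2 * CC)). intros.
  rewrite !HG; try lra. 2,3: rewrite Rabs_R0; lra.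
  rewrite P00. apply Hde'.
  eapply Rle_lt_trans. apply Pdist.
  have Hn := vnorm_ge0 _ ones.
  have : (Rabs u + Rabs v) * vnorm ones <= (Rabs u + Rabs v) * CC.
  { apply Rmult_le_compat_l. have := Rabs_pos u; have := Rabs_pos v; lra. unfold CC; lra. }
  have : (Rabs u + Rabs v) * CC < 2 * (de / (2 * CC)) * CC by nra.
  have : 2 * (de / (2 * CC)) * CC = de by (field; lra).
  lra.
Qed.

Lemma schwarz_ij : D2f x0 i j = D2f x0 j i.
Proof.
  have Hd1 := d1_pos.
  have HS := Schwarz F 0 0.
  have Hloc : locally_2d (fun u v =>
          ex_derive (fun z => F z v) u /\
          ex_derive (fun z => F u z) v /\
          ex_derive (fun z => Derive (fun t => F z t) v) u /\
          ex_derive (fun z => Derive (fun t => F t z) u) v) 0 0.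
  { have Hp : 0 < d1 / 2 by lra.
    exists (mkposreal _ Hp). simpl. intros u v Hu Hv.
    rewrite Rminus_0_r in Hu. rewrite Rminus_0_r in Hv.
    split; [|split; [|split]].
    - exists (Df (P u v) i). apply is_derive_Reals, Fu; lra.
    - exists (Df (P u v) j). apply is_derive_Reals, Fv; lra.
    - apply G1_eq; lra.
    - apply G2_eq; lra. }
  have Hz : Rabs 0 < d1 / 2 by (rewrite Rabs_R0; lra).
  specialize (HS Hloc).
  rewrite (proj1 (G1_eq 0 0 Hz Hz)) (proj1 (G2_eq 0 0 Hz Hz)) P00 in HS.
  symmetry. apply HS.
  - apply (cont2 j i). intros u v Hu Hv. apply G1_eq; auto.
  - apply (cont2 i j). intros u v Hu Hv. apply G2_eq; auto.
Qed.
End Schw.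


Lemma rpow_pos x y : 0 < x -> rpow x y = exp (y * ln x).
Proof. intros Hx. unfold rpow. destruct (Rlt_dec 0 x); [reflexivity|lra]. Qed.

Lemma rpow_nonpos x y : x <= 0 -> y <> 0 -> rpow x y = 0.
Proof. intros Hx Hy. unfold rpow. destruct (Rlt_dec 0 x); [lra|].
  destruct (Req_EM_T y 0); [lra|reflexivity]. Qed.

Lemma rpow_gt0 x y : 0 < x -> 0 < rpow x y.
Proof. intros; rewrite rpow_pos //; apply exp_pos. Qed.

Section W.
Variables (k mu Rad N : R).
Hypothesis Hk : 1 < k.
Hypothesis Hmu : 0 < mu.
Hypothesis HR : 0 < Rad.
Hypothesis HN : N < 0.

Definition pp := (k + 1) / k.
Definition qq := k / (k - 1).
Definition aa := pp / 2.
Definition lk := - pp * ln Rad.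
Definition EE := E_const k mu Rad N.
Definition uQ Q := exp (aa * ln Q + lk).
Definition psi Q := exp (qq * ln (1 - uQ Q)).
Definition psi1 Q := exp (qq * ln (1 - uQ Q)) * (qq * (/ (1 - uQ Q) * (- (uQ Q * (aa * / Q))))).
Definition GG t := exp (- (1 / (k - 1)) * ln (1 + t / EE)).
Definition GG1 t := GG t * (- (1 / (k - 1)) * (/ (1 + t / EE) * / EE)).

Lemma pp_pos : 0 < pp.
Proof. unfold pp. apply Rdiv_lt_0_compat; lra. Qed.
Lemma qq_pos : 0 < qq.
Proof. unfold qq. apply Rdiv_lt_0_compat; lra. Qed.
Lemma aa_pos : 0 < aa.
Proof. unfold aa. have := pp_pos. lra. Qed.

Lemma EE_pos : 0 < EE.
Proof.
  unfold EE, E_const, c_k. apply Rdiv_lt_0_compat. apply rpow_gt0; auto.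
  apply Rmult_lt_0_compat; [|apply Rabs_pos_lt; lra].
  apply Rmult_lt_0_compat; [|lra].
  apply Rmult_lt_0_compat; apply rpow_gt0; auto. apply Rdiv_lt_0_compat; lra.
Qed.

Lemma psi_der Q : 0 < Q -> uQ Q < 1 -> derivable_pt_lim psi Q (psi1 Q).
Proof.
  intros. apply is_derive_Reals. unfold psi, psi1, uQ in *. auto_derive.
  - repeat split; auto; lra.
  - unfold Rminus; ring.
Qed.

Lemma psi1_ex Q : 0 < Q -> uQ Q < 1 -> exists l, derivable_pt_lim psi1 Q l.
Proof.
  intros. have : ex_derive psi1 Q.
  { unfold psi1, uQ in *. auto_derive. repeat split; auto; try lra. }
  intros [l Hl]. exists l. apply is_derive_Reals; auto.
Qed.

Lemma GG_der t : 0 <= t -> derivable_pt_lim GG t (GG1 t).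
Proof.
  intros Ht. have HE := EE_pos.
  assert (0 <= t / EE) by (apply Rdiv_le_0_compat; lra).
  assert (0 < 1 + t / EE) by lra. apply is_derive_Reals. unfold GG1, GG. auto_derive.
  - repeat split; auto.
  - unfold Rdiv; ring.
Qed.

Lemma uQ_lt1 Q : 0 < Q -> Q < Rad * Rad -> uQ Q < 1.
Proof.
  intros HQ HQR. unfold uQ, lk, aa. rewrite <- exp_0. apply exp_increasing.
  have : ln Q < ln (Rad * Rad) by (apply ln_increasing; auto).
  rewrite ln_mult; auto. have := pp_pos. intros. nra.
Qed.

Lemma ln_sqrt' Q : 0 < Q -> ln (sqrt Q) = ln Q / 2.
Proof.
  intros HQ. have Hs := sqrt_lt_R0 Q HQ.
  rewrite -{2}(sqrt_sqrt Q); [|lra]. rewrite ln_mult; auto. field.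
Qed.

Lemma ln_div' x y : 0 < x -> 0 < y -> ln (x / y) = ln x - ln y.
Proof. intros. unfold Rdiv. rewrite ln_mult; [|auto|apply Rinv_0_lt_compat; auto].
  rewrite ln_Rinv; [ring|auto]. Qed.

Lemma w_eq (n : nat) (z x : Vec n) t :
  let Q := dot (fun i => x i - z i) (fun i => x i - z i) in
  0 < Q -> Q < Rad * Rad -> 0 <= t ->
  wfun k mu Rad N z x t = mu * psi Q * GG t.
Proof.
  intros Q HQ HQR Ht. have HE := EE_pos.
  assert (0 <= t / EE) by (apply Rdiv_le_0_compat; lra).
  assert (H1 : 0 < 1 + t / EE) by lra.
  have Hs := sqrt_lt_R0 Q HQ.
  unfold wfun. fold EE. rewrite (rpow_pos (1 + t / EE)); auto.
  have Hu : rpow (vdist x z / Rad) ((k + 1) / k) = uQ Q.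
  { unfold vdist, vnorm. fold Q. rewrite rpow_pos. 2: apply Rdiv_lt_0_compat; auto.
    unfold uQ, lk, aa. f_equal. rewrite ln_div'; auto. rewrite ln_sqrt'; auto.
    fold pp. field. }
  rewrite Hu. have Hu1 := uQ_lt1 Q HQ HQR.
  rewrite rpow_pos; [|lra]. unfold psi, GG. fold qq.
  rewrite Ropp_mult_distr_l_reverse exp_Ropp. unfold Rdiv. ring.
Qed.

Lemma w_at_z (n : nat) (z : Vec n) t : 0 <= t ->
  wfun k mu Rad N z z t = mu * GG t.
Proof.
  intros Ht. have HE := EE_pos.
  assert (0 <= t / EE) by (apply Rdiv_le_0_compat; lra).
  assert (H1 : 0 < 1 + t / EE) by lra.
  unfold wfun. fold EE. rewrite (rpow_pos (1 + t / EE)); auto.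
  rewrite vdist_self. replace (0 / Rad) with 0 by (unfold Rdiv; ring).
  rewrite (rpow_nonpos 0 ((k + 1) / k)); [|lra|]. 2: { have := pp_pos. unfold pp. lra. }
  rewrite Rminus_0_r rpow_pos; [|lra]. rewrite ln_1 Rmult_0_r exp_0.
  unfold GG. rewrite Ropp_mult_distr_l_reverse exp_Ropp. unfold Rdiv. ring.
Qed.

End W.


Definition cont_at (f : R -> R) x := forall eps, 0 < eps -> exists de, 0 < de /\
  forall y, Rabs (y - x) < de -> Rabs (f y - f x) < eps.

Lemma cont_of_pt f x : continuity_pt f x -> cont_at f x.
Proof.
  intros H eps He. destruct (H eps ltac:(lra)) as [al [Hal Hf]]. exists al; split; [lra|].
  intros y Hy. destruct (Req_dec y x) as [->|Hne].
  - rewrite Rminus_diag Rabs_R0; auto.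
  - apply (Hf y). split. split. constructor. auto. exact Hy.
Qed.

Lemma cont_of_deriv f x l : derivable_pt_lim f x l -> cont_at f x.
Proof. intros H. apply cont_of_pt, derivable_continuous_pt. exists l; auto. Qed.

Lemma cont_comp f g x : cont_at g x -> cont_at f (g x) -> cont_at (fun y => f (g y)) x.
Proof.
  intros Hg Hf eps He. destruct (Hf eps He) as [d1 [Hd1 Hf1]].
  destruct (Hg d1 Hd1) as [d2 [Hd2 Hg2]]. exists d2; split; auto.
Qed.

Lemma cont_loc f g x d : 0 < d -> (forall y, Rabs (y - x) < d -> f y = g y) ->
  cont_at g x -> cont_at f x.
Proof.
  intros Hd Heq Hg eps He. destruct (Hg eps He) as [d1 [Hd1 H1]].
  exists (Rmin d d1); split. apply Rmin_pos; auto.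
  intros y Hy. have := Rmin_r d d1. have := Rmin_l d d1. intros.
  rewrite (Heq y); [|lra]. rewrite (Heq x); [|rewrite Rminus_diag Rabs_R0; lra].
  apply H1. lra.
Qed.

Lemma cont_rpow p y0 : 0 < p -> 0 <= y0 -> cont_at (fun y => rpow y p) y0.
Proof.
  intros Hp Hy0. destruct (Rle_lt_or_eq_dec _ _ Hy0) as [Hlt|Heq].
  - apply (cont_loc _ (fun y => exp (p * ln y)) _ y0); auto.
    + intros y Hy. apply rpow_pos. apply Rabs_def2 in Hy. lra.
    + apply (cont_of_deriv _ _ (exp (p * ln y0) * (p * / y0))). apply is_derive_Reals.
      auto_derive. repeat split; auto. ring.
  - subst y0. intros eps He. exists (exp (ln eps / p)). split. apply exp_pos.
    intros y Hy. rewrite (rpow_nonpos 0 p); [|lra|lra]. rewrite Rminus_0_r in Hy |- *.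
    destruct (Rle_lt_dec y 0) as [Hys|Hys].
    + rewrite rpow_nonpos; [|lra|lra]. rewrite Rminus_0_r Rabs_R0; auto.
    + rewrite Rminus_0_r rpow_pos // Rabs_pos_eq. 2: apply Rlt_le, exp_pos.
      rewrite Rabs_pos_eq in Hy; [|lra].
      rewrite <- (exp_ln eps); auto. apply exp_increasing.
      have : ln y < ln eps / p. { rewrite <- (ln_exp (ln eps / p)). apply ln_increasing; auto. }
      intros Hl. apply (Rmult_lt_compat_l p) in Hl; auto.
      replace (p * (ln eps / p)) with (ln eps) in Hl by (field; lra). lra.
Qed.

Section Wcont.
Variables (k mu Rad N : R).
Hypothesis Hk : 1 < k.
Hypothesis Hmu : 0 < mu.
Hypothesis HR : 0 < Rad.
Hypothesis HN : N < 0.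
Variable n : nat.
Variable z : Vec n.

Definition Psi Q := rpow (1 - rpow (sqrt Q / Rad) ((k + 1) / k)) (k / (k - 1)).

Lemma wfun_split x t : 0 <= t ->
  wfun k mu Rad N z x t = mu * Psi (dot (fun i => x i - z i) (fun i => x i - z i)) * GG k mu Rad N t.
Proof.
  intros Ht. have HE := EE_pos k mu Rad N Hk Hmu HR HN.
  assert (0 <= t / EE k mu Rad N) by (apply Rdiv_le_0_compat; lra).
  unfold wfun. fold (EE k mu Rad N). rewrite (rpow_pos (1 + t / EE k mu Rad N)); [|lra].
  unfold GG, Psi, vdist, vnorm.
  rewrite Ropp_mult_distr_l_reverse exp_Ropp. unfold Rdiv; ring.
Qed.

Lemma GG_bounds t : 0 <= t -> 0 < GG k mu Rad N t <= 1.
Proof.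
  intros Ht. have HE := EE_pos k mu Rad N Hk Hmu HR HN.
  assert (0 <= t / EE k mu Rad N) by (apply Rdiv_le_0_compat; lra).
  split. apply exp_pos. unfold GG.
  have : 0 <= ln (1 + t / EE k mu Rad N).
  { rewrite <- ln_1. destruct (Req_dec (t / EE k mu Rad N) 0) as [H0|H0].
    rewrite H0 Rplus_0_r; lra. apply Rlt_le, ln_increasing; lra. }
  have : 0 < 1 / (k - 1) by (apply Rdiv_lt_0_compat; lra).
  intros. destruct (Req_dec (- (1 / (k - 1)) * ln (1 + t / EE k mu Rad N)) 0) as [E0|E0].
  rewrite E0 exp_0; lra. apply Rlt_le. apply (Rlt_le_trans _ (exp 0)); [apply exp_increasing; nra | rewrite exp_0; lra].
Qed.

Lemma V_lt1 Q : 0 <= Q -> Q < Rad * Rad -> rpow (sqrt Q / Rad) ((k + 1) / k) < 1.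
Proof.
  intros HQ HQR. have Hp : 0 < (k + 1) / k by (apply Rdiv_lt_0_compat; lra).
  destruct (Rle_lt_or_eq_dec _ _ HQ) as [HQ'|HQ'].
  - have Hs := sqrt_lt_R0 Q HQ'.
    have Hs2 : sqrt Q < Rad.
    { rewrite <- (sqrt_square Rad); [|lra]. apply sqrt_lt_1; nra. }
    rewrite rpow_pos. 2: apply Rdiv_lt_0_compat; lra.
    apply (Rlt_le_trans _ (exp 0)); [|rewrite exp_0; lra]. apply exp_increasing.
    have : ln (sqrt Q / Rad) < 0.
    { rewrite <- ln_1. apply ln_increasing. apply Rdiv_lt_0_compat; lra.
      apply (Rmult_lt_reg_r Rad); auto. unfold Rdiv. rewrite Rmult_assoc Rinv_l; lra. }
    nra.
  - subst Q. rewrite sqrt_0. replace (0 / Rad) with 0 by (unfold Rdiv; ring).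
    rewrite rpow_nonpos; lra.
Qed.

Lemma cont_Psi Q0 : 0 <= Q0 -> Q0 < Rad * Rad -> cont_at Psi Q0.
Proof.
  intros HQ HQR. have Hp : 0 < (k + 1) / k by (apply Rdiv_lt_0_compat; lra).
  have Hq : 0 < k / (k - 1) by (apply Rdiv_lt_0_compat; lra).
  unfold Psi.
  apply (cont_comp (fun y => rpow (1 - y) (k / (k - 1))) (fun Q => rpow (sqrt Q / Rad) ((k + 1) / k))).
  - apply (cont_comp (fun y => rpow y ((k + 1) / k)) (fun Q => sqrt Q / Rad)).
    + apply (cont_comp (fun y => y / Rad) sqrt). apply cont_of_pt, continuity_pt_sqrt; auto.
      apply (cont_of_deriv _ _ (/ Rad)). apply is_derive_Reals. auto_derive; auto. field; lra.
    + apply cont_rpow; auto. apply Rdiv_le_0_compat; auto. apply sqrt_pos.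
  - have HV := V_lt1 Q0 HQ HQR.
    set y0 := rpow (sqrt Q0 / Rad) ((k + 1) / k).
    fold y0 in HV.
    apply (cont_loc _ (fun y => exp (k / (k - 1) * ln (1 - y))) _ (1 - y0)). lra.
    + intros y Hy. apply rpow_pos. apply Rabs_def2 in Hy. lra.
    + apply (cont_of_deriv _ _ (exp (k / (k - 1) * ln (1 - y0)) * (k / (k - 1) * (/ (1 - y0) * (-1))))).
      apply is_derive_Reals. auto_derive. repeat split; lra. unfold Rminus; ring.
Qed.

Lemma Qdiff (x y : Vec n) :
  Rabs (dot (fun i => y i - z i) (fun i => y i - z i) - dot (fun i => x i - z i) (fun i => x i - z i))
  <= 2 * sumI (fun i => Rabs (x i - z i)) * vdist y x + vdist y x * vdist y x.
Proof.
  set a := (fun i => x i - z i). set d := (fun i => y i - x i).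
  rewrite (_ : (fun i => y i - z i) = (fun i => a i + 1 * d i)).
  2: { apply functional_extensionality; intros i; unfold a, d; ring. }
  rewrite dot_expand. unfold vdist. fold d. rewrite vnorm_sq.
  replace (dot a a + 2 * 1 * dot a d + 1 * 1 * dot d d - dot a a) with (2 * dot a d + dot d d) by ring.
  eapply Rle_trans. apply Rabs_triang. rewrite (Rabs_pos_eq (dot d d)); [|apply dot_ge0].
  apply Rplus_le_compat_r. rewrite Rabs_mult Rabs_pos_eq; [|lra]. rewrite Rmult_assoc.
  apply Rmult_le_compat_l; [lra|].
  unfold dot. rewrite !sumI_L. eapply Rle_trans. apply sumL_abs.
  rewrite Rmult_comm -sumL_scal. apply sumL_le. intros i.
  rewrite Rabs_mult Rmult_comm. apply Rmult_le_compat_r. apply Rabs_pos. apply coord_le_vnorm.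
Qed.

Lemma usc_w T : usc_on (wfun k mu Rad N z) (fun x t => vdist x z < Rad /\ 0 < t /\ t < T).
Proof.
  intros x t [Hx [Ht HT]] eps Heps.
  set Qx := dot (fun i => x i - z i) (fun i => x i - z i).
  have HQ0 : 0 <= Qx by apply dot_ge0.
  have HQR : Qx < Rad * Rad.
  { unfold vdist, vnorm in Hx. fold Qx in Hx. rewrite <- (sqrt_sqrt Qx); auto.
    have := sqrt_pos Qx. nra. }
  set P0 := Psi Qx.
  destruct (cont_Psi Qx HQ0 HQR (eps / (2 * mu))) as [dP [HdP HP]].
  { apply Rdiv_lt_0_compat; lra. }
  have HP0 := Rabs_pos P0.
  destruct (cont_of_deriv _ _ _ (GG_der k mu Rad N Hk Hmu HR HN t ltac:(lra))
              (eps / (2 * mu * (Rabs P0 + 1)))) as [dG [HdG HG]].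
  { apply Rdiv_lt_0_compat; [lra|]. apply Rmult_lt_0_compat; lra. }
  set S := sumI (fun i => Rabs (x i - z i)).
  have HS : 0 <= S by (unfold S, sumI; apply sumL_ge0; intros; apply Rabs_pos).
  set de := Rmin 1 (Rmin (dP / (2 * S + 1)) dG).
  have Hde : 0 < de.
  { apply Rmin_pos; [lra|]. apply Rmin_pos; auto. apply Rdiv_lt_0_compat; lra. }
  exists de. split; auto. intros y s [Hy [Hs HsT]] Hyx Hst.
  have H1 := Rmin_l 1 (Rmin (dP / (2 * S + 1)) dG).
  have H2 := Rmin_r 1 (Rmin (dP / (2 * S + 1)) dG).
  have H3 := Rmin_l (dP / (2 * S + 1)) dG.
  have H4 := Rmin_r (dP / (2 * S + 1)) dG.
  fold de in H1, H2.
  rewrite !wfun_split; try lra. fold Qx. fold P0.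
  set Qy := dot (fun i => y i - z i) (fun i => y i - z i).
  have Hvd := vnorm_ge0 _ (fun i => y i - x i). fold (vdist y x) in Hvd.
  have HQd : Rabs (Qy - Qx) < dP.
  { eapply Rle_lt_trans. apply Qdiff. fold S.
    have : vdist y x * vdist y x <= vdist y x by nra.
    have : (2 * S + 1) * vdist y x < dP.
    { have : vdist y x < dP / (2 * S + 1) by lra.
      intros Hl. apply (Rmult_lt_compat_l (2 * S + 1)) in Hl; [|lra].
      replace ((2 * S + 1) * (dP / (2 * S + 1))) with dP in Hl by (field; lra). lra. }
    nra. }
  have HPy := HP Qy HQd. fold P0 in HPy.
  have HGs := HG s ltac:(lra).
  have [Gs0 Gs1] := GG_bounds s ltac:(lra).
  set Gs := GG k mu Rad N s. set Gt := GG k mu Rad N t. fold Gs in HGs, Gs0, Gs1. fold Gt in HGs.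
  have Hdiff : Rabs (mu * Psi Qy * Gs - mu * P0 * Gt) < eps.
  { replace (mu * Psi Qy * Gs - mu * P0 * Gt) with (mu * ((Psi Qy - P0) * Gs + P0 * (Gs - Gt))) by ring.
    rewrite Rabs_mult (Rabs_pos_eq mu); [|lra].
    have Ht1 : Rabs ((Psi Qy - P0) * Gs + P0 * (Gs - Gt)) <= Rabs (Psi Qy - P0) + Rabs P0 * Rabs (Gs - Gt).
    { eapply Rle_trans. apply Rabs_triang. rewrite !Rabs_mult (Rabs_pos_eq Gs); [|lra].
      have := Rabs_pos (Psi Qy - P0). nra. }
    have : Rabs P0 * Rabs (Gs - Gt) <= Rabs P0 * (eps / (2 * mu * (Rabs P0 + 1))).
    { apply Rmult_le_compat_l; lra. }
    have : Rabs P0 * (eps / (2 * mu * (Rabs P0 + 1))) < eps / (2 * mu).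
    { apply (Rmult_lt_reg_r (2 * mu * (Rabs P0 + 1))). nra.
      replace (Rabs P0 * (eps / (2 * mu * (Rabs P0 + 1))) * (2 * mu * (Rabs P0 + 1))) with (Rabs P0 * eps) by (field; lra).
      replace (eps / (2 * mu) * (2 * mu * (Rabs P0 + 1))) with (eps * (Rabs P0 + 1)) by (field; lra).
      nra. }
    intros.
    have : mu * (Rabs (Psi Qy - P0) + Rabs P0 * Rabs (Gs - Gt)) < mu * (eps / (2 * mu) + eps / (2 * mu)).
    { apply Rmult_lt_compat_l; lra. }
    replace (mu * (eps / (2 * mu) + eps / (2 * mu))) with eps by (field; lra).
    have := Rabs_pos ((Psi Qy - P0) * Gs + P0 * (Gs - Gt)). nra. }
  apply Rabs_def2 in Hdiff. lra.
Qed.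
End Wcont.

Lemma der_loc (f g : R -> R) x l d : 0 < d -> (forall y, Rabs (y - x) < d -> f y = g y) ->
  derivable_pt_lim g x l -> derivable_pt_lim f x l.
Proof.
  intros Hd Heq Hg. apply is_derive_Reals. apply is_derive_Reals in Hg.
  apply (is_derive_ext_loc g f); auto.
  exists (mkposreal d Hd). intros y Hy. symmetry. apply Heq. exact Hy.
Qed.

Lemma rpow_abs_der p Rad : 1 < p -> 0 < Rad ->
  derivable_pt_lim (fun s => rpow (Rabs s / Rad) p) 0 0.
Proof.
  intros Hp HR eps He.
  have Hd : 0 < exp ((ln eps + p * ln Rad) / (p - 1)) by apply exp_pos.
  exists (mkposreal _ Hd). simpl. intros s Hs0 Hs.
  rewrite Rplus_0_l Rabs_R0. replace (0 / Rad) with 0 by (unfold Rdiv; ring).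
  rewrite (rpow_nonpos 0 p); [|lra|lra].
  have Has : 0 < Rabs s by apply Rabs_pos_lt.
  rewrite rpow_pos. 2: apply Rdiv_lt_0_compat; auto.
  replace ((exp (p * ln (Rabs s / Rad)) - 0) / s - 0) with (exp (p * ln (Rabs s / Rad)) / s) by (field; auto).
  unfold Rdiv at 1. rewrite Rabs_mult Rabs_inv (Rabs_pos_eq (exp _)); [|apply Rlt_le, exp_pos].
  rewrite <- (exp_ln (Rabs s)) at 2; auto. rewrite <- exp_Ropp, <- exp_plus.
  rewrite <- (exp_ln eps); auto. apply exp_increasing.
  rewrite ln_div'; auto.
  have : ln (Rabs s) < (ln eps + p * ln Rad) / (p - 1).
  { rewrite <- (ln_exp ((ln eps + p * ln Rad) / (p - 1))). apply ln_increasing; auto. }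
  intros Hl. apply (Rmult_lt_compat_l (p - 1)) in Hl; [|lra].
  replace ((p - 1) * ((ln eps + p * ln Rad) / (p - 1))) with (ln eps + p * ln Rad) in Hl by (field; lra).
  nra.
Qed.

Lemma Psi_sq_der k Rad : 1 < k -> 0 < Rad ->
  derivable_pt_lim (fun s => Psi k Rad (s * s)) 0 0.
Proof.
  intros Hk HR.
  have Hp : 1 < (k + 1) / k by (apply (Rmult_lt_reg_r k); [lra|]; field_simplify; lra).
  have Hq : 0 < k / (k - 1) by (apply Rdiv_lt_0_compat; lra).
  unfold Psi.
  rewrite (_ : (fun s => rpow (1 - rpow (sqrt (s * s) / Rad) ((k + 1) / k)) (k / (k - 1))) =
     (fun s => (fun y => rpow (1 - y) (k / (k - 1))) ((fun s => rpow (Rabs s / Rad) ((k + 1) / k)) s))).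
  2: { apply functional_extensionality; intros s. rewrite <- sqrt_Rsqr_abs. reflexivity. }
  replace 0 with ((- (k / (k - 1))) * 0) at 2 by ring.
  apply (derivable_pt_lim_comp (fun s => rpow (Rabs s / Rad) ((k + 1) / k)) (fun y => rpow (1 - y) (k / (k - 1)))).
  - apply rpow_abs_der; auto.
  - rewrite Rabs_R0. replace (0 / Rad) with 0 by (unfold Rdiv; ring).
    rewrite (rpow_nonpos 0); [|lra|lra].
    apply (der_loc _ (fun y => exp (k / (k - 1) * ln (1 - y))) _ _ 1). lra.
    + intros y Hy. apply rpow_pos. apply Rabs_def2 in Hy. lra.
    + apply is_derive_Reals. auto_derive. repeat split; lra.
      replace (1 + - 0) with 1 by ring. rewrite ln_1 Rmult_0_r exp_0. field. lra.
Qed.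


Lemma lnM x y : 0 < x -> 0 < y -> ln (x * y) = ln x + ln y.
Proof. apply ln_mult. Qed.

Lemma key_identity k mu Rad N A t : 1 < k -> 0 < mu -> 0 < Rad -> N < 0 ->
  0 < A -> A < Rad * Rad -> 0 <= t ->
  rpow (Rabs (2 * (mu * GG k mu Rad N t) * psi1 k Rad A * sqrt A)) (k - 1)
     * (- 2 * (mu * GG k mu Rad N t) * psi1 k Rad A) * N
  = mu * psi k Rad A * GG1 k mu Rad N t.
Proof.
  intros Hk Hmu HR HN HA HAR Ht.
  set E := EE k mu Rad N.
  have HE : 0 < E := EE_pos k mu Rad N Hk Hmu HR HN.
  have Hq := qq_pos k Hk. have Ha := aa_pos k Hk. have Hp := pp_pos k Hk.
  set u := uQ k Rad A.
  have Hu1 : u < 1 := uQ_lt1 k Rad Hk HR A HA HAR.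
  have Hu0 : 0 < u by apply exp_pos.
  assert (0 <= t / E) by (apply Rdiv_le_0_compat; lra).
  assert (Hg : 0 < 1 + t / E) by lra.
  set lg := ln (1 + t / E). set L1 := ln (1 - u). set lm := ln mu. set lA := ln A.
  set lR := ln Rad. set lN := ln (Rabs N).
  set G := GG k mu Rad N t.
  have HG : G = exp (- (1 / (k - 1)) * lg) by reflexivity.
  have HGp : 0 < G by (rewrite HG; apply exp_pos).
  set F := - 2 * (mu * G) * psi1 k Rad A.
  have HF : F = 2 * mu * G * exp (qq k * L1) * qq k * u * aa k * / (1 - u) * / A.
  { unfold F, psi1. fold u. unfold L1. field. split; intro; lra. }
  have HFp : 0 < F.
  { rewrite HF. repeat apply Rmult_lt_0_compat; try lra; try apply exp_pos;
    apply Rinv_0_lt_compat; lra. }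
  have HlnF : ln F = ln 2 + lm + (- (1 / (k - 1)) * lg) + qq k * L1 + ln (qq k)
      + (aa k * lA + lk k Rad) + ln (aa k) - L1 - lA.
  { rewrite HF.
    have Hi1 : 0 < / (1 - u) by (apply Rinv_0_lt_compat; lra).
    have Hi2 : 0 < / A by (apply Rinv_0_lt_compat; lra).
    have He := exp_pos (qq k * L1).
    rewrite !lnM; try lra; repeat apply Rmult_lt_0_compat; try lra.
    all: try (apply Rinv_0_lt_compat; lra).
    rewrite !ln_Rinv; try lra.
    have Hlu : ln u = aa k * lA + lk k Rad by (rewrite /u /uQ ln_exp; reflexivity).
    rewrite Hlu HG !ln_exp /lm /lA /L1. ring. }
  have Habs : Rabs (2 * (mu * G) * psi1 k Rad A * sqrt A) = F * sqrt A.
  { have Hs := sqrt_lt_R0 A HA.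
    replace (2 * (mu * G) * psi1 k Rad A * sqrt A) with (- (F * sqrt A)) by (unfold F; ring).
    rewrite Rabs_Ropp Rabs_pos_eq; [auto|]. apply Rlt_le, Rmult_lt_0_compat; auto. }
  rewrite Habs. fold F.
  have Hs := sqrt_lt_R0 A HA.
  rewrite rpow_pos; [|apply Rmult_lt_0_compat; auto].
  rewrite lnM; auto. rewrite ln_sqrt'; auto. fold lA.
  have HNa : N = - exp lN by (unfold lN; rewrite exp_ln; [rewrite Rabs_left; lra| apply Rabs_pos_lt; lra]).
  rewrite HNa.
  rewrite <- (exp_ln F) at 2; auto.
  have HlnE : ln E = (k + 1) * lR - (k * ln ((k + 1) / (k - 1)) + (k - 1) * lm + ln (k - 1) + lN).
  { unfold E, EE, E_const, c_k.
    have H1 : 0 < (k + 1) / (k - 1) by (apply Rdiv_lt_0_compat; lra).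
    rewrite (rpow_pos Rad) // (rpow_pos ((k+1)/(k-1))) // (rpow_pos mu) //.
    unfold Rdiv at 1. rewrite lnM. 2: apply exp_pos.
    2: { apply Rinv_0_lt_compat. repeat apply Rmult_lt_0_compat; try apply exp_pos; try lra.
         apply Rabs_pos_lt; lra. }
    rewrite ln_Rinv. 2: { repeat apply Rmult_lt_0_compat; try apply exp_pos; try lra. apply Rabs_pos_lt; lra. }
    rewrite !lnM; try apply exp_pos; try lra; try (apply Rabs_pos_lt; lra);
      repeat apply Rmult_lt_0_compat; try apply exp_pos; try lra.
    rewrite !ln_exp /lR /lm /lN. ring. all: apply Rinv_0_lt_compat; lra. }
  have HR' : mu * psi k Rad A * GG1 k mu Rad N t =
     - exp (lm + qq k * L1 + (- (1 / (k - 1)) * lg) + ln (1 / (k - 1)) - lg - ln E).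
  { unfold GG1. fold E G. rewrite HG. change (psi k Rad A) with (exp (qq k * L1)).
    rewrite /Rminus !exp_plus !exp_Ropp /lm /lg.
    rewrite !exp_ln. ring. all: try lra. apply Rdiv_lt_0_compat; lra. }
  rewrite -HNa HR' HNa.
  rewrite <- exp_plus. 
  replace ((k - 1) * (ln F + lA / 2) + ln F) with (k * ln F + (k - 1) * lA / 2) by lra.
  have Hc : ln 2 + ln (qq k) + ln (aa k) = ln ((k + 1) / (k - 1)).
  { rewrite <- !lnM; try lra. all: try (apply Rmult_lt_0_compat; lra). f_equal.
    unfold qq, aa, pp. field. lra. }
  have Hd : ln (1 / (k - 1)) = - ln (k - 1).
  { unfold Rdiv. rewrite Rmult_1_l ln_Rinv; lra. }
  replace (exp (k * ln F + (k - 1) * lA / 2) * - exp lN) with (- exp (k * ln F + (k - 1) * lA / 2 + lN)) by (rewrite exp_plus; ring).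
  f_equal. f_equal.
  rewrite HlnF HlnE Hd.
  replace (ln 2) with (ln ((k + 1) / (k - 1)) - ln (qq k) - ln (aa k)) by lra.
  set l1 := ln (qq k). set l2 := ln (aa k). set K := ln ((k + 1) / (k - 1)). set lk1 := ln (k - 1). unfold lk. rewrite -/lR. clearbody l1 l2 K lk1 lm lA L1 lg lR lN. unfold qq, aa, pp. field. repeat split; intro; lra.
Qed.

Lemma psi1_neg k Rad A : 1 < k -> 0 < Rad -> 0 < A -> A < Rad * Rad -> psi1 k Rad A < 0.
Proof.
  intros Hk HR HA HAR.
  have Hq := qq_pos k Hk. have Ha := aa_pos k Hk.
  unfold psi1. set u := uQ k Rad A.
  have Hu1 : u < 1 := uQ_lt1 k Rad Hk HR A HA HAR.
  have Hu0 : 0 < u by apply exp_pos.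
  have He := exp_pos (qq k * ln (1 - u)).
  have : 0 < qq k * (/ (1 - u) * (u * (aa k * / A))).
  { apply Rmult_lt_0_compat; [exact Hq|]. apply Rmult_lt_0_compat; [apply Rinv_0_lt_compat; lra|].
    apply Rmult_lt_0_compat; [exact Hu0|]. apply Rmult_lt_0_compat; [exact Ha|apply Rinv_0_lt_compat; lra]. }
  intros Hp. nra.
Qed.

Lemma GG1_neg k mu Rad N t : 1 < k -> 0 < mu -> 0 < Rad -> N < 0 -> 0 <= t -> GG1 k mu Rad N t < 0.
Proof.
  intros Hk Hmu HR HN Ht. have HE := EE_pos k mu Rad N Hk Hmu HR HN.
  assert (0 <= t / EE k mu Rad N) by (apply Rdiv_le_0_compat; lra).
  unfold GG1. have HG := exp_pos (- (1 / (k - 1)) * ln (1 + t / EE k mu Rad N)).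
  fold (GG k mu Rad N t) in HG.
  have : 0 < 1 / (k - 1) * (/ (1 + t / EE k mu Rad N) * / EE k mu Rad N).
  { repeat apply Rmult_lt_0_compat; try lra; try (apply Rinv_0_lt_compat; lra).
    }
  intros. nra.
Qed.


Section Geo.
Variable n : nat.
Variable z : Vec n.
Variable Rad : R.
Definition Qz (x : Vec n) := dot (fun i => x i - z i) (fun i => x i - z i).

Lemma Q_near x eps : 0 < eps -> exists de, 0 < de /\
  forall y, vdist y x < de -> Rabs (Qz y - Qz x) < eps.
Proof.
  intros He. set S := sumI (fun i => Rabs (x i - z i)).
  have HS : 0 <= S by (unfold S, sumI; apply sumL_ge0; intros; apply Rabs_pos).
  exists (Rmin 1 (eps / (2 * S + 1))). split.
  { apply Rmin_pos; [lra|]. apply Rdiv_lt_0_compat; lra. }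
  intros y Hy. have H1 := Rmin_l 1 (eps / (2 * S + 1)). have H2 := Rmin_r 1 (eps / (2 * S + 1)).
  have Hvd := vnorm_ge0 _ (fun i => y i - x i). fold (vdist y x) in Hvd.
  eapply Rle_lt_trans. apply Qdiff. fold S.
  have : vdist y x * vdist y x <= vdist y x by nra.
  have : (2 * S + 1) * vdist y x < eps.
  { have : vdist y x < eps / (2 * S + 1) by lra.
    intros Hl. apply (Rmult_lt_compat_l (2 * S + 1)) in Hl; [|lra].
    replace ((2 * S + 1) * (eps / (2 * S + 1))) with eps in Hl by (field; lra). lra. }
  nra.
Qed.

Lemma vdist_Qz x : vdist x z = sqrt (Qz x).
Proof. reflexivity. Qed.

Lemma in_ball_iff x : 0 < Rad -> (vdist x z < Rad <-> Qz x < Rad * Rad).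
Proof.
  intros HR. rewrite vdist_Qz. have HQ : 0 <= Qz x by apply dot_ge0.
  split; intros H.
  - rewrite <- (sqrt_sqrt (Qz x)); auto. have := sqrt_pos (Qz x). nra.
  - rewrite <- (sqrt_square Rad); [|lra]. apply sqrt_lt_1; nra.
Qed.

Lemma ball_open x : 0 < Rad -> vdist x z < Rad -> exists de, 0 < de /\
  forall y, vdist y x < de -> vdist y z < Rad.
Proof.
  intros HR Hx. apply in_ball_iff in Hx; auto.
  destruct (Q_near x (Rad * Rad - Qz x)) as [de [Hde H]]; [lra|].
  exists de; split; auto. intros y Hy. apply in_ball_iff; auto.
  have := H y Hy. intros Ha. apply Rabs_def2 in Ha. lra.
Qed.

Lemma vdist_line (y v : Vec n) s : vdist (fun j => y j + s * v j) y = Rabs s * vnorm v.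
Proof.
  unfold vdist. rewrite <- vnorm_scale. f_equal. apply functional_extensionality; intros j; ring.
Qed.

Lemma Qz_line (y v : Vec n) s :
  Qz (fun j => y j + s * v j) = Qz y + 2 * s * dot (fun i => y i - z i) v + s * s * dot v v.
Proof.
  unfold Qz. rewrite <- dot_expand. f_equal; apply functional_extensionality; intros j; ring.
Qed.
End Geo.

Section Main.
Variables (n : nat) (H : Vec n -> Mat n -> R) (k1 : R).
Hypothesis HA : conditionA H.
Hypothesis HB : conditionB H k1.
Hypothesis Hk : 1 < k1 + 1.
Variables (N : R).
Hypothesis HN : is_N H N.
Hypothesis HNneg : N < 0.
Variables (mu Rad : R).
Hypothesis Hmu : 0 < mu.
Hypothesis HRad : 0 < Rad.
Variable z : Vec n.
Variable T : R.
Definition Dom := fun (x : Vec n) (t : R) => vdist x z < Rad /\ 0 < t /\ t < T.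
Variables (phi : Vec n -> R -> R) (Dphi : Vec n -> R -> Vec n) (D2phi : Vec n -> R -> Mat n)
  (phit : Vec n -> R -> R).
Hypothesis HC : C21_on phi Dphi D2phi phit Dom.
Variables (x0 : Vec n) (t0 : R).
Hypothesis Hdom : Dom x0 t0.
Hypothesis Hmax : local_max_on (fun x t => wfun (k1 + 1) mu Rad N z x t - phi x t) Dom x0 t0.

Lemma dom_ball y : Dom y t0 -> exists de, 0 < de /\ forall y', vdist y' y < de -> Dom y' t0.
Proof.
  intros [Hy Ht]. destruct (ball_open n z Rad y HRad Hy) as [de [Hde H1]].
  exists de; split; auto. intros y' Hy'. split; auto.
Qed.

Lemma cont_at_t0 (f : Vec n -> R -> R) y : cont_on f Dom -> Dom y t0 ->
  forall eps, 0 < eps -> exists de, 0 < de /\ forall y', vdist y' y < de -> Rabs (f y' t0 - f y t0) < eps.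
Proof.
  intros Hc Hy eps He. destruct (Hc y t0 Hy eps He) as [d1 [Hd1 H1]].
  destruct (dom_ball y Hy) as [d2 [Hd2 H2]].
  exists (Rmin d1 d2); split. apply Rmin_pos; auto.
  intros y' Hy'. apply H1. apply H2. have := Rmin_r d1 d2; lra. have := Rmin_l d1 d2; lra.
  rewrite Rminus_diag Rabs_R0; auto.
Qed.

Lemma D2_sym : Defs.symmetric (D2phi x0 t0).
Proof.
  destruct HC as [H1 [H2 [H3 [H4 [H5 [H6 H7]]]]]].
  destruct (dom_ball x0 Hdom) as [d0 [Hd0 Hb]].
  intros i j. symmetry.
  apply (schwarz_ij n (fun y => phi y t0) (fun y i => Dphi y t0 i) (fun y i j => D2phi y t0 i j) x0 d0 Hd0).
  - intros y Hy i'. apply H1, Hb; auto.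
  - intros y Hy i' j'. apply H2, Hb; auto.
  - intros i' j' eps He. apply (cont_at_t0 (fun y t => D2phi y t i' j')); auto.
Qed.

Lemma line_der (y v : Vec n) : Dom y t0 ->
  derivable_pt_lim (fun s => phi (fun j => y j + s * v j) t0) 0 (sumI (fun j => v j * Dphi y t0 j)).
Proof.
  intros Hy. destruct HC as [H1 [H2 [H3 [H4 [H5 [H6 H7]]]]]].
  destruct (dom_ball y Hy) as [d0 [Hd0 Hb]].
  apply (chain_rule n (fun y => phi y t0) (fun y j => Dphi y t0 j) y d0 Hd0).
  - intros y' Hy' j. apply H1, Hb; auto.
  - intros j eps He. apply (cont_at_t0 (fun y t => Dphi y t j)); auto.
Qed.

Lemma line_der2 (y v : Vec n) i : Dom y t0 ->
  derivable_pt_lim (fun s => Dphi (fun j => y j + s * v j) t0 i) 0 (sumI (fun j => v j * D2phi y t0 i j)).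
Proof.
  intros Hy. destruct HC as [H1 [H2 [H3 [H4 [H5 [H6 H7]]]]]].
  destruct (dom_ball y Hy) as [d0 [Hd0 Hb]].
  apply (chain_rule n (fun y => Dphi y t0 i) (fun y j => D2phi y t0 i j) y d0 Hd0).
  - intros y' Hy' j. apply H2, Hb; auto.
  - intros j eps He. apply (cont_at_t0 (fun y t => D2phi y t i j)); auto.
Qed.


Lemma line_small (v : Vec n) de : 0 < de -> exists d, 0 < d /\
  forall s, Rabs s < d -> vdist (fun j => x0 j + s * v j) x0 < de.
Proof.
  intros Hde. have Hv := vnorm_ge0 _ v.
  exists (de / (vnorm v + 1)). split. apply Rdiv_lt_0_compat; lra.
  intros s Hs. rewrite vdist_line.
  have Hs' : Rabs s * (vnorm v + 1) < de.
  { apply (Rmult_lt_compat_r (vnorm v + 1)) in Hs; [|lra].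
    replace (de / (vnorm v + 1) * (vnorm v + 1)) with de in Hs by (field; lra). lra. }
  have := Rabs_pos s. nra.
Qed.

Lemma good_line (v : Vec n) de : 0 < de -> exists d, 0 < d /\
  forall s, Rabs s < d -> Dom (fun j => x0 j + s * v j) t0 /\
     vdist (fun j => x0 j + s * v j) x0 < de /\
     (forall s', s' = s -> wfun (k1 + 1) mu Rad N z (fun j => x0 j + s' * v j) t0 - phi (fun j => x0 j + s' * v j) t0
        <= wfun (k1 + 1) mu Rad N z x0 t0 - phi x0 t0).
Proof.
  intros Hde. destruct Hmax as [dm [Hdm Hm]].
  destruct (dom_ball x0 Hdom) as [db [Hdb Hb]].
  set dd := Rmin de (Rmin dm db).
  have Hdd : 0 < dd by (apply Rmin_pos; auto; apply Rmin_pos; auto).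
  destruct (line_small v dd Hdd) as [d [Hd Hl]].
  have := Rmin_l de (Rmin dm db). have := Rmin_r de (Rmin dm db).
  have := Rmin_l dm db. have := Rmin_r dm db. intros.
  exists d; split; auto. intros s Hs. have Hls := Hl s Hs. unfold dd in *.
  have HD : Dom (fun j => x0 j + s * v j) t0 by (apply Hb; lra).
  split; auto. split. lra.
  intros s' ->. apply Hm; auto. lra. rewrite Rminus_diag Rabs_R0; lra.
Qed.

Lemma g_der (v : Vec n) s : Dom (fun j => x0 j + s * v j) t0 ->
  derivable_pt_lim (fun s => phi (fun j => x0 j + s * v j) t0) s
    (sumI (fun j => v j * Dphi (fun j => x0 j + s * v j) t0 j)).
Proof.
  intros HD. apply der_shift.
  have := line_der (fun j => x0 j + s * v j) v HD.
  rewrite (_ : (fun h => phi (fun j => x0 j + (s + h) * v j) t0) =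
               (fun h => phi (fun j => x0 j + s * v j + h * v j) t0)) //.
  apply functional_extensionality; intros h. f_equal. apply functional_extensionality; intros j; ring.
Qed.

Lemma quad_alt (X : Mat n) v : sumI (fun j => v j * sumI (fun i => v i * X j i)) = quad X v.
Proof.
  unfold quad. apply sumL_ext. intros j. rewrite sumI_L -sumL_scal. apply sumL_ext. intros i. ring.
Qed.

Lemma g'_der (v : Vec n) :
  derivable_pt_lim (fun s => sumI (fun j => v j * Dphi (fun j => x0 j + s * v j) t0 j)) 0
    (quad (D2phi x0 t0) v).
Proof.
  rewrite -quad_alt.
  apply (sumL_derive n (enum 'I_n) (fun j s => v j * Dphi (fun j => x0 j + s * v j) t0 j)).
  intros j. apply (derivable_pt_lim_scal (fun s => Dphi (fun j => x0 j + s * v j) t0 j)).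
  apply line_der2; auto.
Qed.

Lemma time_der (Wt : R -> R) l : (forall t, 0 < t -> Wt t = wfun (k1 + 1) mu Rad N z x0 t) ->
  derivable_pt_lim Wt t0 l -> phit x0 t0 = l.
Proof.
  intros HW Hd. destruct HC as [H1 [H2 [H3 _]]].
  destruct Hmax as [dm [Hdm Hm]]. destruct Hdom as [Hx [Ht HT]].
  have Hh := derivable_pt_lim_minus Wt (fun t => phi x0 t) t0 l (phit x0 t0) Hd (H3 x0 t0 Hdom).
  set dd := Rmin dm (Rmin t0 (T - t0)).
  have Hdd : 0 < dd by (apply Rmin_pos; auto; apply Rmin_pos; lra).
  have := Rmin_l dm (Rmin t0 (T - t0)). have := Rmin_r dm (Rmin t0 (T - t0)).
  have := Rmin_l t0 (T - t0). have := Rmin_r t0 (T - t0). intros.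
  unfold dd in *.
  have := deriv_max0 _ t0 _ dd Hh Hdd.
  intros Hz. have : l - phit x0 t0 = 0; [|lra]. apply Hz.
  intros s Hs. unfold dd in *. apply Rabs_def2 in Hs. unfold minus_fct. rewrite !HW; try lra.
  apply Hm. repeat split; try lra. rewrite vdist_self; lra. apply Rabs_def1; lra.
Qed.

Lemma w_eqQ (x : Vec n) t : 0 < Qz n z x -> Qz n z x < Rad * Rad -> 0 <= t ->
  wfun (k1 + 1) mu Rad N z x t = mu * psi (k1 + 1) Rad (Qz n z x) * GG (k1 + 1) mu Rad N t.
Proof. intros. apply w_eq; auto. Qed.

Lemma line0 (v : Vec n) : (fun j => x0 j + 0 * v j) = x0.
Proof. apply functional_extensionality; intros j; ring. Qed.

Lemma dir_off (v : Vec n) (ps2 : R) :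
  0 < Qz n z x0 -> derivable_pt_lim (psi1 (k1 + 1) Rad) (Qz n z x0) ps2 ->
  sumI (fun j => v j * Dphi x0 t0 j) =
    mu * GG (k1 + 1) mu Rad N t0 * (psi1 (k1 + 1) Rad (Qz n z x0) * (2 * dot (fun i => x0 i - z i) v)) /\
  mu * GG (k1 + 1) mu Rad N t0 * (ps2 * (2 * dot (fun i => x0 i - z i) v) * (2 * dot (fun i => x0 i - z i) v)
     + psi1 (k1 + 1) Rad (Qz n z x0) * (2 * dot v v)) <= quad (D2phi x0 t0) v.
Proof.
  intros HA0 Hps2.
  set A := Qz n z x0. set B := dot (fun i => x0 i - z i) v. set C := dot v v.
  set c := mu * GG (k1 + 1) mu Rad N t0.
  have Ht0 : 0 < t0 by (destruct Hdom as [_ [? _]]; auto).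
  destruct (Q_near n z x0 A HA0) as [dQ [HdQ HQn]].
  destruct (good_line v dQ HdQ) as [d [Hd Hgl]].
  set Qs := fun s => A + 2 * s * B + s * s * C.
  have HQs : forall s, Qz n z (fun j => x0 j + s * v j) = Qs s.
  { intros s. unfold Qs. rewrite Qz_line. reflexivity. }
  have Hrange : forall s, Rabs s < d -> 0 < Qs s /\ Qs s < Rad * Rad.
  { intros s Hs. destruct (Hgl s Hs) as [[HD _] [Hv _]]. rewrite <- HQs. split.
    - have := HQn _ Hv. intros Ha. apply Rabs_def2 in Ha. unfold A in *. lra.
    - apply in_ball_iff; auto. }
  set W := fun s => c * psi (k1 + 1) Rad (Qs s).
  set W' := fun s => c * (psi1 (k1 + 1) Rad (Qs s) * (2 * B + 2 * s * C)).
  have HQd : forall s, derivable_pt_lim Qs s (2 * B + 2 * s * C).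
  { intros s. apply is_derive_Reals. unfold Qs. auto_derive; auto. ring. }
  have HWd : forall s, Rabs s < d -> derivable_pt_lim W s (W' s).
  { intros s Hs. destruct (Hrange s Hs) as [Hq1 Hq2].
    unfold W, W'. apply (derivable_pt_lim_scal (fun s => psi (k1 + 1) Rad (Qs s))).
    apply (derivable_pt_lim_comp Qs (psi (k1 + 1) Rad)); auto.
    apply psi_der; auto. apply uQ_lt1; auto. }
  have HW'd : derivable_pt_lim W' 0
     (c * (ps2 * (2 * B) * (2 * B) + psi1 (k1 + 1) Rad A * (2 * C))).
  { unfold W'. apply (derivable_pt_lim_scal (fun s => psi1 (k1 + 1) Rad (Qs s) * (2 * B + 2 * s * C))).
    have HQs0 : Qs 0 = A by (unfold Qs; ring).
    have E1 := derivable_pt_lim_comp Qs (psi1 (k1 + 1) Rad) 0 (2 * B + 2 * 0 * C) ps2 (HQd 0)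
          ltac:(rewrite HQs0; auto).
    have E2 : derivable_pt_lim (fun s => 2 * B + 2 * s * C) 0 (2 * C).
    { apply is_derive_Reals. auto_derive; auto. ring. }
    have E3 := derivable_pt_lim_mult _ _ 0 _ _ E1 E2.
    unfold mult_fct, comp in E3. rewrite HQs0 in E3.
    replace (ps2 * (2 * B) * (2 * B) + psi1 (k1 + 1) Rad A * (2 * C)) with
      (ps2 * (2 * B + 2 * 0 * C) * (2 * B + 2 * 0 * C) + psi1 (k1 + 1) Rad A * (2 * C)) by ring.
    exact E3. }
  set g := fun s => phi (fun j => x0 j + s * v j) t0.
  set g' := fun s => sumI (fun j => v j * Dphi (fun j => x0 j + s * v j) t0 j).
  have Hgd : forall s, Rabs s < d -> derivable_pt_lim g s (g' s).
  { intros s Hs. apply g_der. apply (Hgl s Hs). }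
  set h := fun s => W s - g s.
  have Hhd : forall s, Rabs s < d -> derivable_pt_lim h s (W' s - g' s).
  { intros s Hs. apply (derivable_pt_lim_minus W g); auto. }
  have Hhmax : forall s, Rabs s < d -> h s <= h 0.
  { intros s Hs. destruct (Hgl s Hs) as [HD [_ Hm]]. have := Hm s erefl.
    have Hd0 : Rabs 0 < d by (rewrite Rabs_R0; lra).
    unfold h, W, g. rewrite line0.
    destruct (Hrange s Hs) as [Hq1 Hq2]. destruct (Hrange 0 Hd0) as [Hq3 Hq4].
    have HQs0 : Qs 0 = A by (unfold Qs; ring).
    rewrite (w_eqQ x0 t0) ?(w_eqQ _ t0); try lra; rewrite ?HQs; fold A; rewrite ?HQs0 in Hq3 Hq4; auto.
    rewrite HQs0. unfold c. intros; nra. }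
  have Hd1 : W' 0 - g' 0 = 0.
  { apply (deriv_max0 h 0 _ d); auto. apply Hhd. rewrite Rabs_R0; lra.
    intros s Hs. apply Hhmax. rewrite Rminus_0_r in Hs; auto. }
  have Hd2 : c * (ps2 * (2 * B) * (2 * B) + psi1 (k1 + 1) Rad A * (2 * C)) - quad (D2phi x0 t0) v <= 0.
  { apply (deriv2_max h (fun s => W' s - g' s) 0 _ d Hd).
    - intros s Hs. apply Hhd. rewrite Rminus_0_r in Hs; auto.
    - apply derivable_pt_lim_minus; auto. apply g'_der.
    - intros s Hs. apply Hhmax. rewrite Rminus_0_r in Hs; auto. }
  split; [|lra].
  unfold W', g' in Hd1. rewrite line0 in Hd1.
  have : Qs 0 = A by (unfold Qs; ring). intros HH. rewrite HH in Hd1.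
  replace (2 * B + 2 * 0 * C) with (2 * B) in Hd1 by ring. lra.
Qed.

Lemma dot_ecoord (i : 'I_n) (f : Vec n) : dot (ecoord i) f = f i.
Proof.
  unfold dot, ecoord. rewrite -(sumI_delta _ i f). apply sumL_ext. intros j.
  case: (j == i); ring.
Qed.

Lemma dot_ecoord_r (i : 'I_n) (f : Vec n) : dot f (ecoord i) = f i.
Proof. rewrite dot_sym. apply dot_ecoord. Qed.

Lemma dir_z : x0 = z -> forall i, Dphi x0 t0 i = 0.
Proof.
  intros Hz i. set v := ecoord i.
  have Ht0 : 0 < t0 by (destruct Hdom as [_ [? _]]; auto).
  destruct (good_line v 1 ltac:(lra)) as [d [Hd Hgl]].
  set c := mu * GG (k1 + 1) mu Rad N t0.
  set W := fun s => c * Psi (k1 + 1) Rad (s * s).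
  have HWd : derivable_pt_lim W 0 0.
  { unfold W. replace 0 with (c * 0) at 2 by ring.
    apply (derivable_pt_lim_scal (fun s => Psi (k1 + 1) Rad (s * s))). apply Psi_sq_der; auto. }
  have HW : forall s, W s = wfun (k1 + 1) mu Rad N z (fun j => x0 j + s * v j) t0.
  { intros s. rewrite wfun_split; auto; try lra. fold (Qz n z (fun j => x0 j + s * v j)).
    rewrite Qz_line. subst x0. unfold W, c.
    rewrite (_ : Qz n z z = 0).
    2: { unfold Qz, dot. rewrite sumI_L (sumL_ext _ _ _ (fun _ => 0)). apply sumL_zero. intros; ring. }
    rewrite (_ : dot (fun i => z i - z i) v = 0).
    2: { unfold dot. rewrite sumI_L (sumL_ext _ _ _ (fun _ => 0)). apply sumL_zero. intros; ring. }
    unfold v. rewrite dot_ecoord /ecoord eqxx. replace (0 + 2 * s * 0 + s * s * 1) with (s * s) by ring. ring. }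
  set h := fun s => W s - phi (fun j => x0 j + s * v j) t0.
  have Hh := derivable_pt_lim_minus _ _ 0 _ _ HWd (g_der v 0 ltac:(rewrite line0; auto)).
  have := deriv_max0 h 0 _ d Hh Hd.
  rewrite line0. intros Hm.
  have : 0 - sumI (fun j => v j * Dphi x0 t0 j) = 0.
  { apply Hm. intros s Hs. rewrite Rminus_0_r in Hs. destruct (Hgl s Hs) as [_ [_ Hg]].
    unfold h. rewrite !HW line0. apply Hg; auto. }
  rewrite (_ : sumI (fun j => v j * Dphi x0 t0 j) = Dphi x0 t0 i). lra.
  apply dot_ecoord.
Qed.

Lemma time_off : 0 < Qz n z x0 ->
  phit x0 t0 = mu * psi (k1 + 1) Rad (Qz n z x0) * GG1 (k1 + 1) mu Rad N t0.
Proof.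
  intros HA0. have HQR : Qz n z x0 < Rad * Rad by (apply in_ball_iff; auto; apply Hdom).
  apply (time_der (fun t => mu * psi (k1 + 1) Rad (Qz n z x0) * GG (k1 + 1) mu Rad N t)).
  - intros t Ht. rewrite w_eqQ; auto. lra.
  - apply (derivable_pt_lim_scal (GG (k1 + 1) mu Rad N)). apply GG_der; auto.
    destruct Hdom as [_ [? _]]; lra.
Qed.

Lemma time_z : x0 = z -> phit x0 t0 = mu * GG1 (k1 + 1) mu Rad N t0.
Proof.
  intros Hz. apply (time_der (fun t => mu * GG (k1 + 1) mu Rad N t)).
  - intros t Ht. rewrite Hz w_at_z; auto. lra.
  - apply (derivable_pt_lim_scal (GG (k1 + 1) mu Rad N)). apply GG_der; auto.
    destruct Hdom as [_ [? _]]; lra.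
Qed.

Lemma Qz0_eq : Qz n z x0 = 0 -> x0 = z.
Proof.
  intros HQ. apply functional_extensionality; intros i.
  have := coord_le_vnorm _ (fun i => x0 i - z i) i.
  unfold vnorm. rewrite (_ : dot _ _ = 0) //. rewrite sqrt_0. intros Hc.
  have := Rabs_pos (x0 i - z i). intros.
  have : Rabs (x0 i - z i) = 0 by lra.
  intros Hq0. apply Rabs_eq_0 in Hq0. lra.
Qed.

Lemma visc_point : H (Dphi x0 t0) (D2phi x0 t0) - phit x0 t0 >= 0.
Proof.
  have Hsym := D2_sym.
  destruct HB as [Hk1 [HBq HBX]].
  have Ht0 : 0 < t0 by (destruct Hdom as [_ [? _]]; auto).
  destruct (Rle_lt_or_eq_dec 0 (Qz n z x0) (dot_ge0 _ _)) as [HA0|HA0].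
  - set A := Qz n z x0.
    have HAp : 0 < A := HA0.
    have HAR : A < Rad * Rad by (apply in_ball_iff; auto; apply Hdom).
    have Hu1 := uQ_lt1 (k1 + 1) Rad Hk HRad A HA0 HAR.
    destruct (psi1_ex (k1 + 1) Rad A HA0 Hu1) as [ps2 Hps2].
    have HP1 := psi1_neg (k1 + 1) Rad A Hk HRad HA0 HAR.
    have HGp := exp_pos (- (1 / (k1 + 1 - 1)) * ln (1 + t0 / EE (k1 + 1) mu Rad N)).
    fold (GG (k1 + 1) mu Rad N t0) in HGp.
    set c := mu * GG (k1 + 1) mu Rad N t0.
    have Hc : 0 < c by (unfold c; nra).
    set P1 := psi1 (k1 + 1) Rad A. fold P1 in HP1.
    set a := fun i => x0 i - z i.
    have Hr : 0 < sqrt A by apply sqrt_lt_R0.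
    have Hrr : sqrt A * sqrt A = A by (apply sqrt_sqrt; lra).
    set r := sqrt A.
    set e := fun i => / r * a i.
    have Hrp : 0 < r := Hr. have Hrr' : r * r = A := Hrr.
    have Hdote : forall v, dot e v = / r * dot a v.
    { intros v. unfold e. apply (dot_scal_l n). }
    have HDphi : Dphi x0 t0 = vscale (2 * c * P1 * r) e.
    { apply functional_extensionality; intros i.
      have := proj1 (dir_off (ecoord i) ps2 HA0 Hps2).
      rewrite (_ : sumI (fun j => ecoord i j * Dphi x0 t0 j) = Dphi x0 t0 i).
      2: { apply (dot_ecoord i (Dphi x0 t0)). }
      rewrite (dot_ecoord_r i). intros ->. unfold vscale, e, a. fold A P1 c. field. intro; lra. }
    have He1 : vnorm e = 1.
    { unfold vnorm. rewrite Hdote dot_sym Hdote.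
      rewrite (_ : dot a a = A) //. rewrite (_ : / r * (/ r * A) = 1). apply sqrt_1.
      rewrite -Hrr'. field. intro; lra. }
    have HcM : 0 < -2 * c * P1 by nra.
    set lam := -2 * ps2 * A / P1.
    set Mi := madd (mscale lam (tens e)) (mscale (-1) (@Imat n)).
    have HMi : Defs.symmetric Mi.
    { apply symmetric_madd; apply symmetric_mscale. apply symmetric_tens. apply symmetric_I. }
    have HM : mle (mscale (-2 * c * P1) Mi) (D2phi x0 t0).
    { intros v. rewrite quad_sub.
      have := proj2 (dir_off v ps2 HA0 Hps2). fold A P1 c a.
      rewrite quad_mscale /Mi quad_madd !quad_mscale quad_tens quad_I Hdote.
      intros Hq.
      have : -2 * c * P1 * (lam * (/ r * dot a v * (/ r * dot a v)) + -1 * dot v v)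
        = c * (ps2 * (2 * dot a v) * (2 * dot a v) + P1 * (2 * dot v v)).
      { unfold lam. rewrite -Hrr'. field. split; intro; lra. }
      lra. }
    have HHe : H e Mi >= N by (apply Rle_ge, (proj1 HN); auto).
    have Hmono : H e (mscale (-2 * c * P1) Mi) <= H e (D2phi x0 t0).
    { apply (proj1 HA); auto. apply symmetric_mscale; auto. }
    rewrite HBX in Hmono; auto.
    rewrite HDphi HBq; auto.
    rewrite time_off; auto. fold A.
    have Hkey := key_identity (k1 + 1) mu Rad N A t0 Hk Hmu HRad HNneg HA0 HAR ltac:(lra).
    fold c P1 in Hkey. fold r in Hkey.
    replace (k1 + 1 - 1) with k1 in Hkey by ring.
    rewrite <- Hkey.
    have Hrpw : 0 <= rpow (Rabs (2 * c * P1 * r)) k1.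
    { unfold rpow. destruct (Rlt_dec 0 _). apply Rlt_le, exp_pos.
      destruct (Req_EM_T k1 0); lra. }
    have : rpow (Rabs (2 * c * P1 * r)) k1 * (-2 * c * P1 * N) <=
           rpow (Rabs (2 * c * P1 * r)) k1 * H e (D2phi x0 t0).
    { apply Rmult_le_compat_l; auto. nra. }
    intros. apply Rle_ge. replace (- 2 * c * P1) with (-2 * c * P1) by ring. nra.
  - have Hz := Qz0_eq (esym HA0).
    have HD0 : Dphi x0 t0 = vscale 0 (Dphi x0 t0).
    { apply functional_extensionality; intros i. unfold vscale. rewrite dir_z; auto. ring. }
    rewrite HD0 HBq; auto. rewrite Rabs_R0 rpow_nonpos; [|lra|lra].
    rewrite time_z; auto.
    have := GG1_neg (k1 + 1) mu Rad N t0 Hk Hmu HRad HNneg ltac:(lra). intros. nra.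
Qed.

End Main.


Lemma rpow_ge0 a b : 0 <= rpow a b.
Proof. unfold rpow. destruct (Rlt_dec 0 a). apply Rlt_le, exp_pos.
  destruct (Req_EM_T b 0); lra. Qed.

Theorem mainTheorem10 (n : nat) (H : Vec n -> Mat n -> R) (k1 : R)
  (Hcont : H_continuous H) (HA : conditionA H) (HB : conditionB H k1)
  (HC : conditionC H) (Hk : 1 < k1 + 1)
  (N : R) (HN : is_N H N) (HNneg : N < 0)
  (mu Rad : R) (Hmu : 0 < mu) (HRad : 0 < Rad) (z : Vec n) :
  let k := k1 + 1 in
  let E := E_const k mu Rad N in
  let w := wfun k mu Rad N z in
  (forall x t, vdist x z <= Rad -> 0 <= t -> 0 <= w x t) /\
  (forall x t, vdist x z = Rad -> 0 <= t -> w x t = 0) /\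
  (forall t, 0 <= t -> w z t = mu * rpow (1 + t / E) (- (1 / (k - 1)))) /\
  (forall T, 0 < T ->
     visc_subsolution H w (fun x t => vdist x z < Rad /\ 0 < t /\ t < T)).
Proof.
  intros k E w. subst k E w.
  split; [|split; [|split]].
  - intros x t _ Ht. rewrite wfun_split; auto.
    have := GG_bounds (k1 + 1) mu Rad N Hk Hmu HRad HNneg t Ht. intros [Hg1 Hg2].
    apply Rmult_le_pos; [apply Rmult_le_pos; [lra|apply rpow_ge0]|lra].
  - intros x t Hx Ht. unfold wfun. rewrite Hx.
    replace (Rad / Rad) with 1 by (field; lra).
    rewrite (rpow_pos 1); [|lra]. rewrite ln_1 Rmult_0_r exp_0.
    replace (1 - 1) with 0 by ring. rewrite rpow_nonpos; [|lra|].
    unfold Rdiv; ring.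
    have : 0 < (k1 + 1) / (k1 + 1 - 1) by (apply Rdiv_lt_0_compat; lra). intros; intro; lra.
  - intros t Ht. rewrite w_at_z; auto.
    have HE := EE_pos (k1 + 1) mu Rad N Hk Hmu HRad HNneg.
    assert (0 <= t / EE (k1 + 1) mu Rad N) by (apply Rdiv_le_0_compat; lra).
    rewrite rpow_pos. 2: { unfold EE in *. lra. }
    unfold GG, EE. reflexivity.
  - intros T HT. split.
    + apply usc_w; auto.
    + intros phi Dphi D2phi phit HC21 x0 t0 Hdom Hmax.
      apply (visc_point n H k1 HA HB Hk N HN HNneg mu Rad Hmu HRad z T phi Dphi D2phi phit HC21 x0 t0 Hdom Hmax).
Qed.
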